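(* Let $\mathcal L$ be a sibling $\sigma_d$-invariant lamination and let $\mathcal L^p$ be its perfect part. Then $\mathcal L^p$ is a sibling $\sigma_d$-invariant lamination. If $\mathcal L$ is uncountable, then $\mathcal L^p\subset\mathcal L$ is nonempty. Every chief is either perfect or countable; in the latter case all its nondegenerate leaves are isolated.
   Context: $\mathbb S$ is the unit circle, $\sigma_d(z)=z^d$, $d\ge2$. A chord $\overline{ab}$ joins $a,b\in\mathbb S$; distinct chords cross if they meet in the open unit disk; a chord is critical if $a\ne b$ and $\sigma_d(a)=\sigma_d(b)$. A lamination is a family of pairwise non-crossing chords (leaves) containing all points of $\mathbb S$, whose union is closed; it is sibling $\sigma_d$-invariant if (1) images of leaves are leaves; (2) every leaf is the image of a leaf; (3) every non-critical leaf $\ell$ belongs to $d$ pairwise disjoint leaves $\ell_1=\ell,\dots,\ell_d$ with equal images. All laminations are assumed sibling $\sigma_d$-invariant. A lamination is nonempty if it has a nondegenerate leaf, countable if it has countably many nondegenerate leaves, uncountable otherwise, perfect if no nondegenerate leaf is isolated (isolated = not a Hausdorff limit of other leaves). The perfect part $\mathcal L^p$ is the maximal (by inclusion) perfect sublamination of $\mathcal L$, equivalently the set of leaves $\ell\in\mathcal L$ such that arbitrarily close to $\ell$ there are uncountably many leaves of $\mathcal L$. A chief is a nonempty sibling $\sigma_d$-invariant lamination minimal by inclusion among such. *)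

(* Defs.v *)
From Stdlib Require Import Reals Lra Lia.
Open Scope R_scope.

Definition pt : Type := (R * R)%type.

Definition on_circle (z : pt) : Prop := fst z * fst z + snd z * snd z = 1.
Definition in_open_disk (z : pt) : Prop := fst z * fst z + snd z * snd z < 1.

(* complex multiplication and power, sigma_d(z) = z^d *)
Definition cmul (z w : pt) : pt :=
  (fst z * fst w - snd z * snd w, fst z * snd w + snd z * fst w).
Fixpoint cpow (z : pt) (n : nat) : pt :=
  match n with O => (1, 0) | S m => cmul z (cpow z m) end.
Definition sigma (d : nat) (z : pt) : pt := cpow z d.

Definition dist (z w : pt) : R :=
  sqrt ((fst z - fst w) * (fst z - fst w) + (snd z - snd w) * (snd z - snd w)).

Definition seg (a b z : pt) : Prop :=
  exists t, 0 <= t <= 1 /\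
    z = ((1 - t) * fst a + t * fst b, (1 - t) * snd a + t * snd b).

(* chords are unordered pairs of endpoints *)
Definition same_chord (a b c e : pt) : Prop :=
  (a = c /\ b = e) \/ (a = e /\ b = c).

Definition cross (a b c e : pt) : Prop :=
  ~ same_chord a b c e /\
  exists z, in_open_disk z /\ seg a b z /\ seg c e z.

Definition critical (d : nat) (a b : pt) : Prop :=
  a <> b /\ sigma d a = sigma d b.

Definition disjoint_chords (l1 l2 : pt * pt) : Prop :=
  ~ exists z, seg (fst l1) (snd l1) z /\ seg (fst l2) (snd l2) z.

Definition closed_set (U : pt -> Prop) : Prop :=
  forall z, (forall eps, 0 < eps -> exists w, U w /\ dist z w < eps) -> U z.

(* A lamination is given by the (symmetric) relation  L a b  <-> the chord ab is a leaf. *)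
Definition lam_union (L : pt -> pt -> Prop) (z : pt) : Prop :=
  exists a b, L a b /\ seg a b z.

Definition lamination (L : pt -> pt -> Prop) : Prop :=
  (forall a b, L a b -> L b a) /\
  (forall a b, L a b -> on_circle a /\ on_circle b) /\
  (forall a, on_circle a -> L a a) /\
  (forall a b c e, L a b -> L c e -> ~ cross a b c e) /\
  closed_set (lam_union L).

Definition sibling_invariant (d : nat) (L : pt -> pt -> Prop) : Prop :=
  lamination L /\
  (forall a b, L a b -> L (sigma d a) (sigma d b)) /\
  (forall a b, L a b -> exists c e, L c e /\ sigma d c = a /\ sigma d e = b) /\
  (forall a b, L a b -> ~ critical d a b ->
     exists f : nat -> pt * pt,
       f O = (a, b) /\
       (forall i, (i < d)%nat -> L (fst (f i)) (snd (f i))) /\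
       (forall i j, (i < d)%nat -> (j < d)%nat -> i <> j -> disjoint_chords (f i) (f j)) /\
       (forall i, (i < d)%nat ->
          same_chord (sigma d (fst (f i))) (sigma d (snd (f i))) (sigma d a) (sigma d b))).

(* Hausdorff distance between the chords ab and ce is < eps *)
Definition hclose (eps : R) (a b c e : pt) : Prop :=
  (forall z, seg a b z -> exists w, seg c e w /\ dist z w < eps) /\
  (forall w, seg c e w -> exists z, seg a b z /\ dist z w < eps).

Definition countable_chords (S : pt -> pt -> Prop) : Prop :=
  exists en : nat -> pt * pt,
    forall a b, S a b -> exists n, same_chord a b (fst (en n)) (snd (en n)).

Definition countable_lam (L : pt -> pt -> Prop) : Prop :=
  countable_chords (fun a b => L a b /\ a <> b).

Definition nonempty_lam (L : pt -> pt -> Prop) : Prop :=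
  exists a b, L a b /\ a <> b.

Definition hlimit_of_others (L : pt -> pt -> Prop) (a b : pt) : Prop :=
  forall eps, 0 < eps -> exists c e, L c e /\ ~ same_chord a b c e /\ hclose eps a b c e.

Definition isolated (L : pt -> pt -> Prop) (a b : pt) : Prop :=
  ~ hlimit_of_others L a b.

Definition perfect (L : pt -> pt -> Prop) : Prop :=
  forall a b, L a b -> a <> b -> ~ isolated L a b.

Definition perfect_part (L : pt -> pt -> Prop) (a b : pt) : Prop :=
  L a b /\
  forall eps, 0 < eps -> ~ countable_chords (fun c e => L c e /\ hclose eps a b c e).

Definition chief (d : nat) (L : pt -> pt -> Prop) : Prop :=
  sibling_invariant d L /\ nonempty_lam L /\
  forall L' : pt -> pt -> Prop,
    sibling_invariant d L' -> nonempty_lam L' ->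
    (forall a b, L' a b -> L a b) -> forall a b, L a b -> L' a b.

(* Main.v *)
Require Import Defs.
From Stdlib Require Import Reals.
Open Scope R_scope.

From Stdlib Require Import Reals Lra Lia Psatz Field Classical ClassicalEpsilon FunctionalExtensionality PropExtensionality Arith Cantor ZArith.
Require Import Defs.
Open Scope R_scope.

Definition N2 (z : pt) : R := fst z * fst z + snd z * snd z.
Definition D2 (z w : pt) : R :=
  (fst z - fst w) * (fst z - fst w) + (snd z - snd w) * (snd z - snd w).
Definition padd (z w : pt) : pt := (fst z + fst w, snd z + snd w).
Definition psub (z w : pt) : pt := (fst z - fst w, snd z - snd w).
Definition cconj (z : pt) : pt := (fst z, - snd z).
Definition one : pt := (1, 0).

Lemma D2_nonneg z w : 0 <= D2 z w.
Proof. unfold D2; apply Rplus_le_le_0_compat; apply Rle_0_sqr. Qed.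
Lemma N2_nonneg z : 0 <= N2 z.
Proof. unfold N2; apply Rplus_le_le_0_compat; apply Rle_0_sqr. Qed.

Lemma dist_D2 z w : dist z w = sqrt (D2 z w).
Proof. reflexivity. Qed.

Lemma dist_nonneg z w : 0 <= dist z w.
Proof. apply sqrt_pos. Qed.

Lemma D2_sym z w : D2 z w = D2 w z.
Proof. unfold D2; ring. Qed.
Lemma dist_sym z w : dist z w = dist w z.
Proof. rewrite !dist_D2, D2_sym; reflexivity. Qed.

Lemma dist_refl z : dist z z = 0.
Proof. rewrite dist_D2; unfold D2. replace (_ + _) with 0 by ring. apply sqrt_0. Qed.

Lemma dist_sq z w : dist z w * dist z w = D2 z w.
Proof. rewrite dist_D2. apply sqrt_sqrt, D2_nonneg. Qed.

Lemma pt_eq (z w : pt) : fst z = fst w -> snd z = snd w -> z = w.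
Proof. destruct z, w; simpl; intros; subst; reflexivity. Qed.

Lemma sumsq0 x y : x * x + y * y = 0 -> x = 0 /\ y = 0.
Proof.
  intro H. assert (hx := Rle_0_sqr x). assert (hy := Rle_0_sqr y). unfold Rsqr in *.
  assert (x * x = 0) by lra. assert (y * y = 0) by lra.
  split; [destruct (Rmult_integral _ _ H0)|destruct (Rmult_integral _ _ H1)]; auto.
Qed.

Lemma D2_eq0 z w : D2 z w = 0 -> z = w.
Proof.
  intro H. unfold D2 in H. apply sumsq0 in H. destruct H. apply pt_eq; lra.
Qed.

Lemma dist_eq0 z w : dist z w = 0 -> z = w.
Proof.
  intro H. assert (H2 := dist_sq z w). rewrite H in H2. apply D2_eq0. lra.
Qed.

Lemma dist_lt_D2 z w e : 0 < e -> D2 z w < e * e -> dist z w < e.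
Proof.
  intros He H. rewrite dist_D2. rewrite <- (sqrt_square e) by lra.
  apply sqrt_lt_1_alt. split; [apply D2_nonneg| exact H].
Qed.

Lemma D2_lt_dist z w e : dist z w < e -> D2 z w < e * e.
Proof.
  intro H. rewrite <- dist_sq. assert (0 <= dist z w) by apply dist_nonneg. nra.
Qed.

Lemma dist_le_D2 z w e : 0 <= e -> D2 z w <= e * e -> dist z w <= e.
Proof.
  intros He H. rewrite dist_D2. rewrite <- (sqrt_square e) by lra.
  apply sqrt_le_1_alt. exact H.
Qed.

Lemma D2_le_dist z w e : dist z w <= e -> D2 z w <= e * e.
Proof.
  intro H. rewrite <- dist_sq. assert (0 <= dist z w) by apply dist_nonneg. nra.
Qed.

Lemma dist_triangle x y z : dist x z <= dist x y + dist y z.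
Proof.
  assert (h1 := dist_sq x y). assert (h2 := dist_sq y z). assert (h3 := dist_sq x z).
  assert (p1 := dist_nonneg x y). assert (p2 := dist_nonneg y z). assert (p3 := dist_nonneg x z).
  set (a := dist x y) in *. set (b := dist y z) in *. set (c := dist x z) in *.
  unfold D2 in *.
  set (u1 := fst x - fst y) in *. set (u2 := snd x - snd y) in *.
  set (v1 := fst y - fst z) in *. set (v2 := snd y - snd z) in *.
  assert (E : (fst x - fst z) = u1 + v1) by (unfold u1, v1; ring).
  assert (E2 : (snd x - snd z) = u2 + v2) by (unfold u2, v2; ring).
  rewrite E, E2 in h3.
  assert (CS : u1 * v1 + u2 * v2 <= a * b).
  { assert ((u1*v1+u2*v2)*(u1*v1+u2*v2) <= (a*b)*(a*b)).
    { replace ((a*b)*(a*b)) with ((a*a)*(b*b)) by ring. rewrite h1, h2.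
      assert (E3: (u1*u1+u2*u2)*(v1*v1+v2*v2) - (u1*v1+u2*v2)*(u1*v1+u2*v2) = (u1*v2-u2*v1)*(u1*v2-u2*v1)) by ring.
      assert (0 <= (u1*v2-u2*v1)*(u1*v2-u2*v1)) by apply Rle_0_sqr. lra. }
    assert (0 <= a * b) by nra. nra. }
  nra.
Qed.

Lemma abs_le_of_sq x dd : 0 <= dd -> x * x <= dd * dd -> Rabs x <= dd.
Proof. intros h1 h2. apply Rabs_le. split; nra. Qed.
Lemma abs_fst_le z w : Rabs (fst z - fst w) <= dist z w.
Proof.
  apply abs_le_of_sq. apply dist_nonneg. rewrite dist_sq; unfold D2.
  assert (h := Rle_0_sqr (snd z - snd w)); unfold Rsqr in h; lra.
Qed.
Lemma abs_snd_le z w : Rabs (snd z - snd w) <= dist z w.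
Proof.
  apply abs_le_of_sq. apply dist_nonneg. rewrite dist_sq; unfold D2.
  assert (h := Rle_0_sqr (fst z - fst w)); unfold Rsqr in h; lra.
Qed.
Lemma sq_abs_eq x : Rabs x * Rabs x = x * x.
Proof. rewrite <- Rabs_mult. apply Rabs_pos_eq. apply Rle_0_sqr. Qed.
Lemma dist_le_abs z w : dist z w <= Rabs (fst z - fst w) + Rabs (snd z - snd w).
Proof.
  apply dist_le_D2. assert (h1 := Rabs_pos (fst z - fst w)); assert (h2 := Rabs_pos (snd z - snd w)). lra.
  unfold D2. rewrite <- (sq_abs_eq (fst z - fst w)), <- (sq_abs_eq (snd z - snd w)).
  assert (h1 := Rabs_pos (fst z - fst w)); assert (h2 := Rabs_pos (snd z - snd w)). nra.
Qed.

Lemma on_circle_N2 z : on_circle z <-> N2 z = 1.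
Proof. reflexivity. Qed.

Lemma cmul_comm z w : cmul z w = cmul w z.
Proof. apply pt_eq; simpl; ring. Qed.
Lemma cmul_assoc z w u : cmul z (cmul w u) = cmul (cmul z w) u.
Proof. apply pt_eq; simpl; ring. Qed.
Lemma cmul_one z : cmul z one = z.
Proof. apply pt_eq; simpl; ring. Qed.
Lemma N2_cmul z w : N2 (cmul z w) = N2 z * N2 w.
Proof. unfold N2; simpl; ring. Qed.
Lemma D2_cmul a x y : D2 (cmul a x) (cmul a y) = N2 a * D2 x y.
Proof. unfold D2, N2; simpl; ring. Qed.
Lemma dist_cmul a x y : on_circle a -> dist (cmul a x) (cmul a y) = dist x y.
Proof. intro h. rewrite !dist_D2, D2_cmul. rewrite (proj1 (on_circle_N2 a) h). f_equal; ring. Qed.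

Lemma N2_cpow z n : N2 (cpow z n) = N2 z ^ n.
Proof. induction n; simpl. unfold N2; simpl; ring. rewrite N2_cmul, IHn; ring. Qed.


Lemma on_circle_cpow z n : on_circle z -> on_circle (cpow z n).
Proof. intro h. apply on_circle_N2. rewrite N2_cpow. rewrite (proj1 (on_circle_N2 z) h). apply pow1. Qed.

Lemma on_circle_cmul z w : on_circle z -> on_circle w -> on_circle (cmul z w).
Proof. intros h1 h2. apply on_circle_N2. rewrite N2_cmul. rewrite (proj1 (on_circle_N2 _) h1), (proj1 (on_circle_N2 _) h2). ring. Qed.

Lemma on_circle_sigma d z : on_circle z -> on_circle (sigma d z).
Proof. apply on_circle_cpow. Qed.

Lemma cpow_cmul z w n : cpow (cmul z w) n = cmul (cpow z n) (cpow w n).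
Proof. induction n; simpl. apply pt_eq; simpl; ring. rewrite IHn. apply pt_eq; simpl; ring. Qed.

Lemma cpow_one n : cpow one n = one.
Proof. induction n; simpl. reflexivity. rewrite IHn. apply pt_eq; simpl; ring. Qed.

Lemma cmul_conj z : on_circle z -> cmul (cconj z) z = one.
Proof. intro h. unfold on_circle in h. apply pt_eq; simpl; nra. Qed.

Lemma cpow_lip z w n : on_circle z -> on_circle w ->
  dist (cpow z n) (cpow w n) <= INR n * dist z w.
Proof.
  intros hz hw. induction n.
  - simpl. rewrite dist_refl. lra.
  - simpl cpow. rewrite S_INR.
    eapply Rle_trans. apply (dist_triangle _ (cmul z (cpow w n))).
    rewrite dist_cmul by exact hz.
    rewrite (cmul_comm z (cpow w n)), (cmul_comm w (cpow w n)).
    rewrite dist_cmul by (apply on_circle_cpow; exact hw). lra.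
Qed.

Lemma sigma_lip d z w : on_circle z -> on_circle w ->
  dist (sigma d z) (sigma d w) <= INR d * dist z w.
Proof. apply cpow_lip. Qed.

Lemma abs_le_split x a : Rabs x <= a -> - a <= x <= a.
Proof. intro h. assert (h1 := Rle_abs x). assert (h2 := Rle_abs (- x)). rewrite Rabs_Ropp in h2. lra. Qed.
Lemma abs_lt_split x a : Rabs x < a -> - a < x < a.
Proof. intro h. assert (h1 := Rle_abs x). assert (h2 := Rle_abs (- x)). rewrite Rabs_Ropp in h2. lra. Qed.

Fixpoint gs (u : pt) (n : nat) : pt :=
  match n with O => (0, 0) | S m => padd (gs u m) (cpow u m) end.

Lemma gs_id u n : psub (cpow u n) one = cmul (psub u one) (gs u n).
Proof.
  induction n.
  - apply pt_eq; simpl; ring.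
  - simpl gs. simpl cpow.
    assert (h1 := f_equal fst IHn). assert (h2 := f_equal snd IHn). simpl in h1, h2.
    apply pt_eq; simpl; nra.
Qed.

Lemma cmul_cancel a x y : on_circle a -> cmul a x = cmul a y -> x = y.
Proof.
  intros ha h. assert (E := f_equal (cmul (cconj a)) h).
  rewrite !cmul_assoc, cmul_conj in E by exact ha.
  rewrite (cmul_comm one x), (cmul_comm one y), !cmul_one in E. exact E.
Qed.

Lemma on_circle_conj z : on_circle z -> on_circle (cconj z).
Proof. unfold on_circle; simpl; intro; lra. Qed.

Lemma on_circle_one : on_circle one.
Proof. unfold on_circle, one; simpl; ring. Qed.

Lemma cmul_zero x y : cmul x y = (0,0) -> y <> (0,0) -> x = (0,0).
Proof.
  intros h hy. assert (h1 := f_equal fst h); assert (h2 := f_equal snd h); simpl in h1, h2.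
  assert (Ny : N2 y <> 0).
  { intro E. apply hy. unfold N2 in E. apply sumsq0 in E. destruct E. apply pt_eq; simpl; lra. }
  unfold N2 in Ny.
  assert (e1 : fst x * (fst y * fst y + snd y * snd y) = 0).
  { replace (fst x * (fst y * fst y + snd y * snd y)) with
      (fst y * (fst x * fst y - snd x * snd y) + snd y * (fst x * snd y + snd x * fst y)) by ring.
    rewrite h1, h2; ring. }
  assert (e2 : snd x * (fst y * fst y + snd y * snd y) = 0).
  { replace (snd x * (fst y * fst y + snd y * snd y)) with
      (fst y * (fst x * snd y + snd x * fst y) - snd y * (fst x * fst y - snd x * snd y)) by ring.
    rewrite h1, h2; ring. }
  apply Rmult_integral in e1; apply Rmult_integral in e2.
  apply pt_eq; simpl; tauto.
Qed.

Lemma gs_pos u d : (1 <= d)%nat -> on_circle u -> dist u one < 1 / INR d ->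
  forall m, (m <= d)%nat -> 0 <= fst (gs u m) /\ ((1 <= m)%nat -> 0 < fst (gs u m)).
Proof.
  intros hd hu hdist. induction m; intro hm.
  - simpl. split; [lra| intro; lia].
  - destruct IHm as [I1 I2]; [lia|].
    assert (P : 0 < fst (cpow u m)).
    { assert (L := cpow_lip u one m hu on_circle_one). rewrite cpow_one in L.
      assert (A := abs_fst_le (cpow u m) one). unfold one at 1 in A. simpl fst in A.
      assert (Hm : INR m <= INR d - 1).
      { rewrite <- (Rplus_0_r (INR m)). replace (INR d) with (INR (S m + (d - S m))) by (f_equal; lia).
        rewrite plus_INR, S_INR. assert (0 <= INR (d - S m)) by apply pos_INR. lra. }
      assert (Dpos : 0 < INR d) by (apply lt_0_INR; lia).
      assert (INR m * dist u one < 1).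
      { assert (0 <= INR m) by apply pos_INR. assert (0 <= dist u one) by apply dist_nonneg.
        assert (INR m * dist u one <= (INR d - 1) * dist u one) by nra.
        assert ((INR d - 1) * dist u one < 1).
        { assert (dist u one * INR d < 1).
          { apply (Rmult_lt_compat_r (INR d)) in hdist; [|lra].
            unfold Rdiv in hdist. rewrite Rmult_assoc, Rinv_l in hdist by lra. lra. }
          nra. }
        lra. }
      apply abs_le_split in A. lra. }
    simpl gs. simpl. split; [lra|]. intros _. lra.
Qed.

Lemma loc_inj d z w : (1 <= d)%nat -> on_circle z -> on_circle w ->
  dist z w < 1 / INR d -> sigma d z = sigma d w -> z = w.
Proof.
  intros hd hz hw hdist hs.
  set (u := cmul (cconj z) w).
  assert (hu : on_circle u) by (apply on_circle_cmul; [apply on_circle_conj|]; assumption).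
  assert (zu : cmul z u = w).
  { unfold u. rewrite cmul_assoc, (cmul_comm z (cconj z)), cmul_conj by exact hz.
    rewrite cmul_comm, cmul_one. reflexivity. }
  assert (du : dist u one < 1 / INR d).
  { rewrite <- (dist_cmul z u one hz), zu, cmul_one, dist_sym. exact hdist. }
  assert (pu : cpow u d = one).
  { unfold sigma in hs. rewrite <- zu, cpow_cmul in hs.
    rewrite <- (cmul_one (cpow z d)) in hs at 1.
    apply cmul_cancel in hs; [symmetry; exact hs| apply on_circle_cpow; exact hz]. }
  assert (G := gs_id u d). rewrite pu in G.
  assert (G0 : psub one one = (0,0)) by (apply pt_eq; simpl; ring).
  rewrite G0 in G. symmetry in G. apply cmul_zero in G.
  - assert (u = one).
    { assert (g1 := f_equal fst G); assert (g2 := f_equal snd G); simpl in g1, g2.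
      apply pt_eq; unfold one; simpl; lra. }
    rewrite <- zu, H, cmul_one. reflexivity.
  - intro E. destruct (gs_pos u d hd hu du d (le_n d)) as [_ P].
    specialize (P hd). rewrite E in P. simpl in P. lra.
Qed.

Definition ch : Type := (pt * pt)%type.
Definition swap (x : ch) : ch := (snd x, fst x).
Definition same (x y : ch) : Prop := same_chord (fst x) (snd x) (fst y) (snd y).
Definition rho (x y : ch) : R :=
  Rmin (Rmax (dist (fst x) (fst y)) (dist (snd x) (snd y)))
       (Rmax (dist (fst x) (snd y)) (dist (snd x) (fst y))).

Lemma rho_le_char x y r : rho x y <= r <->
  (dist (fst x) (fst y) <= r /\ dist (snd x) (snd y) <= r) \/
  (dist (fst x) (snd y) <= r /\ dist (snd x) (fst y) <= r).
Proof.
  unfold rho. unfold Rmin, Rmax.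
  repeat destruct Rle_dec; split; intros; try lra; intuition lra.
Qed.

Lemma rho_lt_char x y r : rho x y < r <->
  (dist (fst x) (fst y) < r /\ dist (snd x) (snd y) < r) \/
  (dist (fst x) (snd y) < r /\ dist (snd x) (fst y) < r).
Proof.
  unfold rho. unfold Rmin, Rmax.
  repeat destruct Rle_dec; split; intros; try lra; intuition lra.
Qed.

Lemma rho_nonneg x y : 0 <= rho x y.
Proof.
  destruct (Rle_lt_dec 0 (rho x y)); auto.
  apply rho_lt_char in r. destruct r as [[A B]|[A B]];
  [assert (h := dist_nonneg (fst x) (fst y))|assert (h := dist_nonneg (fst x) (snd y))]; lra.
Qed.

Lemma rho_sym x y : rho x y = rho y x.
Proof. unfold rho. rewrite (dist_sym (fst x)), (dist_sym (snd x)), (dist_sym (fst x) (snd y)),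
  (dist_sym (snd x) (fst y)). rewrite (Rmax_comm (dist (snd y) (fst x))). reflexivity. Qed.

Lemma rho_swap_r x y : rho x (swap y) = rho x y.
Proof. unfold rho, swap; simpl. apply Rmin_comm. Qed.
Lemma rho_swap_l x y : rho (swap x) y = rho x y.
Proof. rewrite rho_sym, rho_swap_r, rho_sym. reflexivity. Qed.

Lemma rho_refl x : rho x x = 0.
Proof. apply Rle_antisym; [|apply rho_nonneg]. apply rho_le_char. left. rewrite !dist_refl. lra. Qed.

Lemma rho_tri x y z : rho x z <= rho x y + rho y z.
Proof.
  assert (h1 := proj1 (rho_le_char x y _) (Rle_refl _)).
  assert (h2 := proj1 (rho_le_char y z _) (Rle_refl _)).
  apply rho_le_char.
  assert (t1 := dist_triangle (fst x) (fst y) (fst z)).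
  assert (t2 := dist_triangle (snd x) (snd y) (snd z)).
  assert (t3 := dist_triangle (fst x) (snd y) (snd z)).
  assert (t4 := dist_triangle (snd x) (fst y) (fst z)).
  assert (t5 := dist_triangle (fst x) (fst y) (snd z)).
  assert (t6 := dist_triangle (snd x) (snd y) (fst z)).
  assert (t7 := dist_triangle (fst x) (snd y) (fst z)).
  assert (t8 := dist_triangle (snd x) (fst y) (snd z)).
  destruct h1 as [[a1 a2]|[a1 a2]]; destruct h2 as [[b1 b2]|[b1 b2]];
  [left|right|right|left]; split; lra.
Qed.

Lemma rho_zero_same x y : rho x y = 0 -> same x y.
Proof.
  intro h. assert (h' : rho x y <= 0) by lra. apply rho_le_char in h'.
  assert (n := dist_nonneg).
  unfold same, same_chord. destruct h' as [[a b]|[a b]]; [left|right]; split;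
  apply dist_eq0; apply Rle_antisym; auto; apply dist_nonneg.
Qed.

Lemma same_rho x y : same x y -> rho x y = 0.
Proof.
  intro h. destruct x as [x1 x2], y as [y1 y2]. unfold same, same_chord in h; simpl in h.
  destruct h as [[-> ->]|[-> ->]].
  - apply rho_refl.
  - change (y2, y1) with (swap (y1, y2)). rewrite rho_swap_l. apply rho_refl.
Qed.

Lemma same_sym x y : same x y -> same y x.
Proof. unfold same, same_chord. intuition congruence. Qed.
Lemma same_trans x y z : same x y -> same y z -> same x z.
Proof. unfold same, same_chord. intuition congruence. Qed.
Lemma same_refl x : same x x.
Proof. unfold same, same_chord. left; auto. Qed.
Lemma same_swap x : same x (swap x).
Proof. unfold same, same_chord, swap. right; auto. Qed.

Lemma seg_sym a b z : seg a b z -> seg b a z.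
Proof.
  intros [t [ht ->]]. exists (1 - t). split; [lra|]. apply pt_eq; simpl; ring.
Qed.

Lemma seg_left a b : seg a b a.
Proof. exists 0. split; [lra|]. apply pt_eq; simpl; ring. Qed.
Lemma seg_right a b : seg a b b.
Proof. exists 1. split; [lra|]. apply pt_eq; simpl; ring. Qed.

Definition cvx (t : R) (a b : pt) : pt :=
  ((1 - t) * fst a + t * fst b, (1 - t) * snd a + t * snd b).

Lemma dist_scale t a b c : 0 <= t ->
  dist ((t * fst a + fst c, t * snd a + snd c)) ((t * fst b + fst c, t * snd b + snd c)) = t * dist a b.
Proof.
  intro ht. rewrite !dist_D2. replace (D2 _ _) with ((t*t) * D2 a b) by (unfold D2; simpl; ring).
  rewrite sqrt_mult by (try apply D2_nonneg; nra). rewrite sqrt_square by lra. reflexivity.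
Qed.

Lemma dist_cvx t a b c e : 0 <= t <= 1 ->
  dist (cvx t a b) (cvx t c e) <= (1 - t) * dist a c + t * dist b e.
Proof.
  intro ht. eapply Rle_trans. apply (dist_triangle _ (cvx t c b)).
  apply Rplus_le_compat; apply Req_le.
  - unfold cvx. rewrite <- (dist_scale (1 - t) a c (t * fst b, t * snd b)) by lra. reflexivity.
  - unfold cvx. rewrite <- (dist_scale t b e ((1-t) * fst c, (1-t) * snd c)) by lra.
    f_equal; apply pt_eq; simpl; ring.
Qed.

Lemma cvx_lt t d1 d2 e : 0 <= t <= 1 -> d1 < e -> d2 < e -> (1 - t) * d1 + t * d2 < e.
Proof.
  intros [h0 h1] a b.
  assert ((1 - t) * d1 <= (1 - t) * e) by (apply Rmult_le_compat_l; lra).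
  assert (t * d2 <= t * e) by (apply Rmult_le_compat_l; lra).
  destruct (Req_dec t 0). subst. lra. assert (t * d2 < t * e) by (apply Rmult_lt_compat_l; lra). lra.
Qed.

Lemma near_hclose x y eps : rho x y < eps -> hclose eps (fst x) (snd x) (fst y) (snd y).
Proof.
  intro h. apply rho_lt_char in h.
  assert (K : forall a b c e, (dist a c < eps /\ dist b e < eps) \/ (dist a e < eps /\ dist b c < eps) ->
     forall z, seg a b z -> exists w, seg c e w /\ dist z w < eps).
  { intros a b c e H z [t [ht ->]]. destruct H as [[h1 h2]|[h1 h2]].
    - exists (cvx t c e). split. exists t; split; auto.
      eapply Rle_lt_trans. apply (dist_cvx t a b c e ht). apply cvx_lt; auto.
    - exists (cvx (1-t) c e). split. exists (1-t); split; [lra|reflexivity].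
      replace (cvx (1 - t) c e) with (cvx t e c) by (apply pt_eq; unfold cvx; simpl; ring).
      eapply Rle_lt_trans. apply (dist_cvx t a b e c ht). apply cvx_lt; auto. }
  split.
  - apply K; exact h.
  - intros w hw. destruct (K (fst y) (snd y) (fst x) (snd x)) with w as [z [hz hd]]; auto.
    rewrite !(dist_sym (fst y)), !(dist_sym (snd y)). intuition.
    exists z. split; auto. rewrite dist_sym; auto.
Qed.

Lemma hclose_mono e1 e2 a b c e : e1 <= e2 -> hclose e1 a b c e -> hclose e2 a b c e.
Proof.
  intros h [H1 H2]. split.
  - intros z hz. destruct (H1 z hz) as [w [? ?]]. exists w. split; auto; lra.
  - intros w hw. destruct (H2 w hw) as [z [? ?]]. exists z. split; auto; lra.
Qed.

Lemma hclose_sym eps a b c e : hclose eps a b c e -> hclose eps c e a b.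
Proof.
  intros [H1 H2]. split.
  - intros w hw. destruct (H2 w hw) as [z [? ?]]. exists z. rewrite dist_sym. auto.
  - intros z hz. destruct (H1 z hz) as [w [? ?]]. exists w. rewrite dist_sym. auto.
Qed.

Lemma hclose_swapl eps a b c e : hclose eps a b c e -> hclose eps b a c e.
Proof.
  intros [H1 H2]. split.
  - intros z hz. apply H1, seg_sym, hz.
  - intros w hw. destruct (H2 w hw) as [z [? ?]]. exists z. split; auto. apply seg_sym; auto.
Qed.

Lemma hclose_swapr eps a b c e : hclose eps a b c e -> hclose eps a b e c.
Proof. intro h. apply hclose_sym, hclose_swapl, hclose_sym, h. Qed.

Lemma hclose_tri e1 e2 a b c e f g : hclose e1 a b c e -> hclose e2 c e f g -> hclose (e1 + e2) a b f g.
Proof.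
  intros [H1 H2] [K1 K2]. split.
  - intros z hz. destruct (H1 z hz) as [w [hw d1]]. destruct (K1 w hw) as [u [hu d2]].
    exists u. split; auto. eapply Rle_lt_trans. apply (dist_triangle z w u). lra.
  - intros u hu. destruct (K2 u hu) as [w [hw d2]]. destruct (H2 w hw) as [z [hz d1]].
    exists z. split; auto. eapply Rle_lt_trans. apply (dist_triangle z w u). lra.
Qed.

Definition origin : pt := (0, 0).

Lemma dist_origin z : dist z origin = sqrt (N2 z).
Proof. rewrite dist_D2. f_equal. unfold D2, N2, origin; simpl; ring. Qed.

Lemma N2_cvx t c e : on_circle c -> on_circle e ->
  N2 (cvx t c e) = 1 - t * (1 - t) * D2 c e.
Proof.
  intros h1' h2'. assert (h1 := proj1 (on_circle_N2 c) h1'). assert (h2 := proj1 (on_circle_N2 e) h2').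
  transitivity ((1 - t) * N2 c + t * N2 e - t * (1 - t) * D2 c e).
  unfold N2, D2, cvx; simpl; ring. rewrite h1, h2; ring.
Qed.

Lemma sqrt_ge_self x : 0 <= x <= 1 -> x <= sqrt x.
Proof.
  intros [h0 h1]. assert (hs := sqrt_pos x). assert (hq := sqrt_sqrt x h0).
  assert (sqrt x <= 1). { rewrite <- sqrt_1. apply sqrt_le_1_alt. lra. } nra.
Qed.

Lemma circ_end a c e w eps : on_circle a -> on_circle c -> on_circle e ->
  seg c e w -> dist a w < eps -> 0 < eps <= 1 ->
  dist a c < 3 * sqrt eps \/ dist a e < 3 * sqrt eps.
Proof.
  intros ha hc he [t [ht ->]] hd he1. fold (cvx t c e) in *.
  set (w := cvx t c e) in *.
  assert (Nw : N2 w = 1 - t * (1 - t) * D2 c e) by (apply N2_cvx; auto).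
  assert (T := dist_triangle a w origin).
  rewrite !dist_origin in T. rewrite (proj1 (on_circle_N2 a) ha), sqrt_1 in T.
  assert (S1 : 1 - eps < sqrt (N2 w)) by lra.
  assert (S2 : (1 - eps) * (1 - eps) < N2 w).
  { rewrite <- (sqrt_sqrt (N2 w)) by apply N2_nonneg. assert (0 <= 1 - eps) by lra. nra. }
  assert (K : t * (1 - t) * D2 c e < 2 * eps) by nra.
  assert (Dn := D2_nonneg c e).
  assert (se := sqrt_pos eps). assert (see := sqrt_sqrt eps (Rlt_le _ _ (proj1 he1))).
  assert (ele := sqrt_ge_self eps (conj (Rlt_le _ _ (proj1 he1)) (proj2 he1))).
  destruct (Rle_lt_dec t (1/2)).
  - left. assert (Dwc : D2 w c = t * t * D2 c e) by (unfold w, D2, cvx; simpl; ring).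
    assert (D2 w c < (2 * sqrt eps) * (2 * sqrt eps)).
    { rewrite Dwc. assert (t * t * D2 c e <= 2 * (t * (1 - t) * D2 c e)).
      { assert (0 <= t * D2 c e) by nra. nra. }
      nra. }
    assert (dist w c < 2 * sqrt eps) by (apply dist_lt_D2; nra).
    assert (X := dist_triangle a w c). lra.
  - right. assert (Dwe : D2 w e = (1 - t) * (1 - t) * D2 c e) by (unfold w, D2, cvx; simpl; ring).
    assert (D2 w e < (2 * sqrt eps) * (2 * sqrt eps)).
    { rewrite Dwe. assert ((1 - t) * (1 - t) * D2 c e <= 2 * (t * (1 - t) * D2 c e)).
      { assert (0 <= (1 - t) * D2 c e) by nra. nra. }
      nra. }
    assert (dist w e < 2 * sqrt eps) by (apply dist_lt_D2; nra).
    assert (X := dist_triangle a w e). lra.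
Qed.

Lemma dist_tri3 a b c e : dist a e <= dist a b + dist b c + dist c e.
Proof. assert (h1 := dist_triangle a b e). assert (h2 := dist_triangle b c e). lra. Qed.

Lemma combine4 x y h :
  (dist (fst x) (fst y) < h \/ dist (fst x) (snd y) < h) ->
  (dist (snd x) (fst y) < h \/ dist (snd x) (snd y) < h) ->
  (dist (fst y) (fst x) < h \/ dist (fst y) (snd x) < h) ->
  (dist (snd y) (fst x) < h \/ dist (snd y) (snd x) < h) ->
  rho x y < 3 * h.
Proof.
  intros H1 H2 H3 H4.
  rewrite (dist_sym (fst y)), (dist_sym (fst y) (snd x)) in H3.
  rewrite (dist_sym (snd y)), (dist_sym (snd y) (snd x)) in H4.
  assert (t1 := dist_tri3 (fst x) (snd y) (snd x) (fst y)).
  assert (t2 := dist_tri3 (snd x) (fst y) (fst x) (snd y)).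
  assert (t3 := dist_tri3 (fst x) (fst y) (snd x) (snd y)).
  assert (t4 := dist_tri3 (snd x) (snd y) (fst x) (fst y)).
  rewrite (dist_sym (snd y) (snd x)), (dist_sym (fst y) (fst x)) in *.
  rewrite (dist_sym (snd y) (fst x)), (dist_sym (fst y) (snd x)) in *.
  assert (p1 := dist_nonneg (fst x) (fst y)). assert (p2 := dist_nonneg (fst x) (snd y)).
  assert (p3 := dist_nonneg (snd x) (fst y)). assert (p4 := dist_nonneg (snd x) (snd y)).
  apply rho_lt_char.
  destruct H1, H2, H3, H4; try (first [left; split; lra | right; split; lra]).
Qed.

Lemma hclose_rho x y eps :
  on_circle (fst x) -> on_circle (snd x) -> on_circle (fst y) -> on_circle (snd y) ->
  0 < eps <= 1 -> hclose eps (fst x) (snd x) (fst y) (snd y) ->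
  rho x y < 9 * sqrt eps.
Proof.
  intros h1 h2 h3 h4 he [H1 H2].
  replace (9 * sqrt eps) with (3 * (3 * sqrt eps)) by ring. apply combine4.
  - destruct (H1 (fst x) (seg_left _ _)) as [w [hw d]]. eapply circ_end; eauto.
  - destruct (H1 (snd x) (seg_right _ _)) as [w [hw d]]. eapply circ_end; eauto.
  - destruct (H2 (fst y) (seg_left _ _)) as [w [hw d]]. rewrite dist_sym in d. eapply circ_end; eauto.
  - destruct (H2 (snd y) (seg_right _ _)) as [w [hw d]]. rewrite dist_sym in d. eapply circ_end; eauto.
Qed.

Lemma hclose_rho_eps delta : 0 < delta -> exists eps, 0 < eps /\ forall x y,
  on_circle (fst x) -> on_circle (snd x) -> on_circle (fst y) -> on_circle (snd y) ->
  hclose eps (fst x) (snd x) (fst y) (snd y) -> rho x y < delta.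
Proof.
  intro hd. set (e := Rmin 1 ((delta / 9) * (delta / 9))).
  assert (e0 : 0 < e) by (unfold e; apply Rmin_pos; [lra| apply Rmult_lt_0_compat; lra]).
  assert (e1 : e <= 1) by apply Rmin_l.
  exists e. split; auto. intros x y a b c f H.
  eapply Rlt_le_trans. apply (hclose_rho x y e); auto.
  assert (sqrt e <= delta / 9).
  { rewrite <- (sqrt_square (delta/9)) by lra. apply sqrt_le_1_alt. apply Rmin_r. }
  lra.
Qed.

Definition orient (p q r : pt) : R :=
  (fst q - fst p) * (snd r - snd p) - (snd q - snd p) * (fst r - fst p).

Lemma O_cvx p q t c e : orient p q (cvx t c e) = (1 - t) * orient p q c + t * orient p q e.
Proof. unfold orient, cvx; simpl; ring. Qed.

Lemma O_self_cvx c e t : orient c e (cvx t c e) = 0.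
Proof. unfold orient, cvx; simpl; ring. Qed.

Lemma O_line p q r : on_circle p -> on_circle q -> on_circle r -> p <> q -> orient p q r = 0 ->
  r = p \/ r = q.
Proof.
  destruct p as [p1 p2], q as [q1 q2], r as [r1 r2]. unfold on_circle, orient; simpl.
  intros hp hq hr hpq ho.
  set (n := (q1 - p1) * (q1 - p1) + (q2 - p2) * (q2 - p2)).
  assert (hn : n <> 0).
  { intro E. apply hpq. unfold n in E. apply sumsq0 in E. destruct E. f_equal; lra. }
  set (s := ((r1 - p1) * (q1 - p1) + (r2 - p2) * (q2 - p2)) / n).
  set (X := (r1 - p1) * (q1 - p1) + (r2 - p2) * (q2 - p2)) in s.
  assert (k1 : (r1 - p1) * n = X * (q1 - p1)).
  { replace ((r1 - p1) * n) with (X * (q1 - p1) - (q2 - p2) * ((q1 - p1) * (r2 - p2) - (q2 - p2) * (r1 - p1)))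
      by (unfold X, n; ring). rewrite ho. ring. }
  assert (k2 : (r2 - p2) * n = X * (q2 - p2)).
  { replace ((r2 - p2) * n) with (X * (q2 - p2) + (q1 - p1) * ((q1 - p1) * (r2 - p2) - (q2 - p2) * (r1 - p1)))
      by (unfold X, n; ring). rewrite ho. ring. }
  assert (e1 : r1 = p1 + s * (q1 - p1)).
  { unfold s. unfold Rdiv. replace (X * / n * (q1 - p1)) with ((X * (q1 - p1)) * / n) by ring.
    rewrite <- k1. rewrite Rmult_assoc, Rinv_r by exact hn. ring. }
  assert (e2 : r2 = p2 + s * (q2 - p2)).
  { unfold s. unfold Rdiv. replace (X * / n * (q2 - p2)) with ((X * (q2 - p2)) * / n) by ring.
    rewrite <- k2. rewrite Rmult_assoc, Rinv_r by exact hn. ring. }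
  assert (E : s * (s - 1) * n = 0).
  { assert (Y : s * (s - 1) * n =
      (r1 * r1 + r2 * r2 - 1) - (1 - s) * (p1 * p1 + p2 * p2 - 1) - s * (q1 * q1 + q2 * q2 - 1)).
    { rewrite e1, e2. unfold n. ring. }
    rewrite Y, hp, hq, hr. ring. }
  apply Rmult_integral in E. destruct E as [E|E]; [|contradiction].
  apply Rmult_integral in E. destruct E as [E|E].
  - left. rewrite E in e1, e2. f_equal; lra.
  - right. assert (s = 1) by lra. rewrite H in e1, e2. f_equal; lra.
Qed.

Lemma cvx_open a b t : on_circle a -> on_circle b -> a <> b -> 0 < t < 1 -> in_open_disk (cvx t a b).
Proof.
  intros ha hb hab ht. unfold in_open_disk. fold (N2 (cvx t a b)). rewrite N2_cvx by auto.
  assert (D2 a b <> 0) by (intro E; apply hab, D2_eq0, E).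
  assert (0 < D2 a b) by (assert (h := D2_nonneg a b); lra).
  assert (0 < t * (1 - t)) by nra. nra.
Qed.

Lemma seg_cvx a b z : seg a b z <-> exists t, 0 <= t <= 1 /\ z = cvx t a b.
Proof. reflexivity. Qed.

Lemma seg_boundary a b z : on_circle a -> on_circle b -> seg a b z -> ~ in_open_disk z -> z = a \/ z = b.
Proof.
  intros ha hb [t [ht ->]] hn. destruct (classic (a = b)) as [<-|hab].
  - left. apply pt_eq; unfold cvx; simpl; ring.
  - destruct (Req_dec t 0) as [->|h0]. left; apply pt_eq; unfold cvx; simpl; ring.
    destruct (Req_dec t 1) as [->|h1]. right; apply pt_eq; unfold cvx; simpl; ring.
    exfalso; apply hn. apply cvx_open; auto. lra.
Qed.

Lemma segs_meet p q r s :
  orient p q r * orient p q s < 0 -> orient r s p * orient r s q < 0 ->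
  exists l, 0 < l < 1 /\ seg r s (cvx l p q).
Proof.
  intros h1 h2.
  set (A := orient r s p) in *. set (B := orient r s q) in *. set (C := orient p q r) in *. set (Dd := orient p q s) in *.
  assert (hAB : A - B <> 0) by nra. assert (hCD : C - Dd <> 0) by nra.
  exists (A / (A - B)). split.
  - destruct (Rlt_dec 0 A).
    + assert (B < 0) by nra. split; [apply Rdiv_lt_0_compat; lra|].
      apply (Rmult_lt_reg_r (A - B)); [lra|]. field_simplify; lra.
    + assert (A < 0) by (destruct (Req_dec A 0); [rewrite H in h2; lra| lra]).
      assert (0 < B) by nra. split.
      * replace (A / (A - B)) with ((- A) / (B - A)) by (field; lra). apply Rdiv_lt_0_compat; lra.
      * replace (A / (A - B)) with ((- A) / (B - A)) by (field; lra).
        apply (Rmult_lt_reg_r (B - A)); [lra|]. field_simplify; lra.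
  - exists (C / (C - Dd)). split.
    + destruct (Rlt_dec 0 C).
      * assert (Dd < 0) by nra. split; [apply Rlt_le, Rdiv_lt_0_compat; lra|].
        apply Rlt_le. apply (Rmult_lt_reg_r (C - Dd)); [lra|]. field_simplify; lra.
      * assert (C < 0) by (destruct (Req_dec C 0); [rewrite H in h1; lra| lra]).
        assert (0 < Dd) by nra.
        replace (C / (C - Dd)) with ((- C) / (Dd - C)) by (field; lra). split.
        -- apply Rlt_le, Rdiv_lt_0_compat; lra.
        -- apply Rlt_le. apply (Rmult_lt_reg_r (Dd - C)); [lra|]. field_simplify; lra.
    + unfold cvx, A, B, C, Dd, orient. apply pt_eq; simpl; field; split; auto.
Qed.

Definition incr (phi : nat -> nat) : Prop := forall n, (phi n < phi (S n))%nat.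

Lemma incr_ge phi : incr phi -> forall n, (n <= phi n)%nat.
Proof. intros h n. induction n. lia. specialize (h n). lia. Qed.

Lemma incr_mono phi : incr phi -> forall n m, (n <= m)%nat -> (phi n <= phi m)%nat.
Proof. intros h n m hnm. induction hnm. lia. specialize (h m). lia. Qed.

Lemma incr_comp phi psi : incr phi -> incr psi -> incr (fun n => phi (psi n)).
Proof.
  intros h1 h2 n. assert (h := h2 n). assert (M := incr_mono phi h1 (S (psi n)) (psi (S n)) h).
  specialize (h1 (psi n)). lia.
Qed.

Lemma cv_const c : Un_cv (fun _ => c) c.
Proof. intros e he. exists O. intros. unfold Rdist. rewrite Rminus_diag, Rabs_R0. lra. Qed.

Lemma cv_sub u l phi : incr phi -> Un_cv u l -> Un_cv (fun n => u (phi n)) l.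
Proof.
  intros hp h e he. destruct (h e he) as [N HN]. exists N. intros n hn. apply HN.
  assert (H := incr_ge phi hp n). lia.
Qed.

Lemma cv_evext u v l N : (forall n, (n >= N)%nat -> u n = v n) -> Un_cv u l -> Un_cv v l.
Proof.
  intros E h e he. destruct (h e he) as [M HM]. exists (max N M). intros n hn.
  rewrite <- E by lia. apply HM. lia.
Qed.

Lemma cv_pos u l : Un_cv u l -> 0 < l -> exists N, forall n, (n >= N)%nat -> 0 < u n.
Proof.
  intros h hl. destruct (h l hl) as [N HN]. exists N. intros n hn. specialize (HN n hn).
  unfold Rdist in HN. apply abs_lt_split in HN. lra.
Qed.

Lemma cv_neg u l : Un_cv u l -> l < 0 -> exists N, forall n, (n >= N)%nat -> u n < 0.
Proof.
  intros h hl. destruct (h (-l)) as [N HN]. lra. exists N. intros n hn. specialize (HN n hn).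
  unfold Rdist in HN. apply abs_lt_split in HN. lra.
Qed.

Lemma cv_le u l c N : (forall n, (n >= N)%nat -> u n <= c) -> Un_cv u l -> l <= c.
Proof.
  intros H h. destruct (Rle_lt_dec l c); auto.
  destruct (h (l - c)) as [M HM]. lra. specialize (HM (max N M) ltac:(lia)).
  specialize (H (max N M) ltac:(lia)). unfold Rdist in HM. apply abs_lt_split in HM. lra.
Qed.

Lemma cv_ge u l c N : (forall n, (n >= N)%nat -> c <= u n) -> Un_cv u l -> c <= l.
Proof.
  intros H h. destruct (Rle_lt_dec c l); auto.
  destruct (h (c - l)) as [M HM]. lra. specialize (HM (max N M) ltac:(lia)).
  specialize (H (max N M) ltac:(lia)). unfold Rdist in HM. apply abs_lt_split in HM. lra.
Qed.

Lemma cv_eq u l c N : (forall n, (n >= N)%nat -> u n = c) -> Un_cv u l -> l = c.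
Proof.
  intros H h. apply Rle_antisym. apply (cv_le u l c N); [intros; rewrite H; auto; lra|auto].
  apply (cv_ge u l c N); [intros; rewrite H; auto; lra|auto].
Qed.

Definition cvp (u : nat -> pt) (l : pt) : Prop :=
  Un_cv (fun n => fst (u n)) (fst l) /\ Un_cv (fun n => snd (u n)) (snd l).
Definition cvc (u : nat -> ch) (l : ch) : Prop :=
  cvp (fun n => fst (u n)) (fst l) /\ cvp (fun n => snd (u n)) (snd l).

Lemma cvp_dist u l : cvp u l -> forall e, 0 < e -> exists N, forall n, (n >= N)%nat -> dist (u n) l < e.
Proof.
  intros [h1 h2] e he. destruct (h1 (e/2)) as [N1 H1]. lra. destruct (h2 (e/2)) as [N2 H2]. lra.
  exists (max N1 N2). intros n hn. specialize (H1 n ltac:(lia)). specialize (H2 n ltac:(lia)).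
  unfold Rdist in *. eapply Rle_lt_trans. apply dist_le_abs. lra.
Qed.

Lemma dist_cvp u l : (forall e, 0 < e -> exists N, forall n, (n >= N)%nat -> dist (u n) l < e) -> cvp u l.
Proof.
  intro h. split; intros e he; destruct (h e he) as [N HN]; exists N; intros n hn;
  unfold Rdist; eapply Rle_lt_trans; try apply (HN n hn).
  apply abs_fst_le. apply abs_snd_le.
Qed.

Lemma cvp_sub u l phi : incr phi -> cvp u l -> cvp (fun n => u (phi n)) l.
Proof. intros hp [h1 h2]. split; apply (cv_sub (fun n => _ (u n))); auto. Qed.
Lemma cvc_sub u l phi : incr phi -> cvc u l -> cvc (fun n => u (phi n)) l.
Proof. intros hp [h1 h2]. split; apply (cvp_sub (fun n => _ (u n))); auto. Qed.

Lemma cvp_uniq u l1 l2 : cvp u l1 -> cvp u l2 -> l1 = l2.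
Proof.
  intros [a b] [c e]. apply pt_eq. eapply UL_sequence; eauto. eapply UL_sequence; eauto.
Qed.

Lemma cvp_const z : cvp (fun _ => z) z.
Proof. split; apply cv_const. Qed.

Lemma cvp_cmul u v l m : cvp u l -> cvp v m -> cvp (fun n => cmul (u n) (v n)) (cmul l m).
Proof.
  intros [a b] [c e]. split; simpl.
  - apply CV_minus; apply CV_mult; auto.
  - apply CV_plus; apply CV_mult; auto.
Qed.

Lemma cvp_cpow u l k : cvp u l -> cvp (fun n => cpow (u n) k) (cpow l k).
Proof.
  intro h. induction k; simpl.
  - apply cvp_const.
  - apply cvp_cmul; auto.
Qed.

Lemma cvp_sigma d u l : cvp u l -> cvp (fun n => sigma d (u n)) (sigma d l).
Proof. apply cvp_cpow. Qed.

Lemma cv_N2 u l : cvp u l -> Un_cv (fun n => N2 (u n)) (N2 l).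
Proof. intros [a b]. unfold N2. apply CV_plus; apply CV_mult; auto. Qed.

Lemma on_circle_lim u l : cvp u l -> (forall n, on_circle (u n)) -> on_circle l.
Proof.
  intros h H. apply on_circle_N2. apply (cv_eq (fun n => N2 (u n)) (N2 l) 1 O).
  intros; apply on_circle_N2, H. apply cv_N2, h.
Qed.

Lemma cv_O u v w a b c : cvp u a -> cvp v b -> cvp w c ->
  Un_cv (fun n => orient (u n) (v n) (w n)) (orient a b c).
Proof.
  intros [a1 a2] [b1 b2] [c1 c2]. unfold orient.
  apply CV_minus; apply CV_mult; apply CV_minus; auto.
Qed.

Lemma cv_D2 u v a b : cvp u a -> cvp v b -> Un_cv (fun n => D2 (u n) (v n)) (D2 a b).
Proof.
  intros [a1 a2] [b1 b2]. unfold D2. apply CV_plus; apply CV_mult; apply CV_minus; auto.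
Qed.

Lemma extract1 (u : nat -> R) : (forall n, -1 <= u n <= 1) ->
  exists phi, incr phi /\ exists l, Un_cv (fun n => u (phi n)) l.
Proof.
  intro hb. destruct (Bolzano_Weierstrass u _ (compact_P3 (-1) 1) hb) as [l hl].
  assert (G : forall N k, exists p, (N <= p)%nat /\ Rabs (u p - l) < / INR (S k)).
  { intros N k. assert (hk : 0 < / INR (S k)) by (apply Rinv_0_lt_compat, lt_0_INR; lia).
    destruct (hl (disc l (mkposreal _ hk)) N) as [p [hp hv]].
    - exists (mkposreal _ hk). intros y hy; exact hy.
    - exists p. split; auto. }
  set (g := fun N k => proj1_sig (constructive_indefinite_description _ (G N k))).
  assert (gs : forall N k, (N <= g N k)%nat /\ Rabs (u (g N k) - l) < / INR (S k)).
  { intros. unfold g. destruct constructive_indefinite_description; simpl; auto. }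
  set (phi := fix f n := match n with O => g O O | S m => g (S (f m)) (S m) end).
  exists phi. split.
  - intro n. simpl. destruct (gs (S (phi n)) (S n)). lia.
  - exists l. intros e he. destruct (archimed_cor1 e he) as [N [hN hN0]].
    exists N. intros n hn. unfold Rdist.
    assert (Rabs (u (phi n) - l) < / INR (S n)).
    { destruct n; simpl; apply gs. }
    eapply Rlt_trans. apply H. eapply Rle_lt_trans; [|apply hN].
    apply Rinv_le_contravar. apply lt_0_INR; lia. apply le_INR; lia.
Qed.

Lemma coord_bound z : on_circle z -> -1 <= fst z <= 1 /\ -1 <= snd z <= 1.
Proof.
  unfold on_circle. intro h. assert (h1 := Rle_0_sqr (fst z)). assert (h2 := Rle_0_sqr (snd z)).
  unfold Rsqr in *. split; split; nra.
Qed.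

Definition bnd (z : pt) : Prop := -1 <= fst z <= 1 /\ -1 <= snd z <= 1.

Lemma extract_pt (u : nat -> pt) : (forall n, bnd (u n)) ->
  exists phi, incr phi /\ exists l, cvp (fun n => u (phi n)) l.
Proof.
  intro hb. destruct (extract1 (fun n => fst (u n))) as [p1 [hp1 [l1 h1]]]. intro; apply hb.
  destruct (extract1 (fun n => snd (u (p1 n)))) as [p2 [hp2 [l2 h2]]]. intro; apply hb.
  exists (fun n => p1 (p2 n)). split. apply incr_comp; auto.
  exists (l1, l2). split; simpl; auto. apply (cv_sub (fun n => fst (u (p1 n)))); auto.
Qed.

Definition bndc (x : ch) : Prop := bnd (fst x) /\ bnd (snd x).

Lemma extract_ch (u : nat -> ch) : (forall n, bndc (u n)) ->
  exists phi, incr phi /\ exists l, cvc (fun n => u (phi n)) l.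
Proof.
  intro hb. destruct (extract_pt (fun n => fst (u n))) as [p1 [hp1 [l1 h1]]]. intro; apply hb.
  destruct (extract_pt (fun n => snd (u (p1 n)))) as [p2 [hp2 [l2 h2]]]. intro; apply hb.
  exists (fun n => p1 (p2 n)). split. apply incr_comp; auto.
  exists (l1, l2). split; simpl; auto. apply (cvp_sub (fun n => fst (u (p1 n)))); auto.
Qed.

Lemma extract_fam (g : nat -> nat -> ch) m : (forall n i, (i < m)%nat -> bndc (g n i)) ->
  exists phi, incr phi /\ exists h, forall i, (i < m)%nat -> cvc (fun n => g (phi n) i) (h i).
Proof.
  revert g. induction m; intros g hb.
  - exists (fun n => n). split. intro; lia. exists (fun _ => (origin, origin)). intros; lia.
  - destruct (IHm g) as [p1 [hp1 [h1 H1]]]. intros; apply hb; lia.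
    destruct (extract_ch (fun n => g (p1 n) m)) as [p2 [hp2 [l2 H2]]]. intro; apply hb; lia.
    exists (fun n => p1 (p2 n)). split. apply incr_comp; auto.
    exists (fun i => if Nat.eqb i m then l2 else h1 i). intros i hi.
    destruct (Nat.eqb_spec i m).
    + subst. exact H2.
    + apply (cvc_sub (fun n => g (p1 n) i)); auto. apply H1. lia.
Qed.

Lemma bnd_circle z : on_circle z -> bnd z.
Proof. apply coord_bound. Qed.

Lemma orient_at_l c e : orient c e c = 0.
Proof. unfold orient; ring. Qed.
Lemma orient_at_r c e : orient c e e = 0.
Proof. unfold orient; ring. Qed.

Lemma not_open_circle z : on_circle z -> ~ in_open_disk z.
Proof. unfold on_circle, in_open_disk. lra. Qed.

Lemma leaf_lim L u l : lamination L -> (forall n, L (fst (u n)) (snd (u n))) -> cvc u l ->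
  L (fst l) (snd l).
Proof.
  intros hL hu [ha hb]. destruct hL as [Lsym [Lcirc [Lpt [Lnc Lcl]]]].
  set (a := fst l) in *. set (b := snd l) in *.
  assert (ca : on_circle a) by (apply (on_circle_lim _ _ ha); intro n; apply (Lcirc _ _ (hu n))).
  assert (cb : on_circle b) by (apply (on_circle_lim _ _ hb); intro n; apply (Lcirc _ _ (hu n))).
  destruct (classic (a = b)) as [<-|hab]. apply Lpt; auto.
  set (m := cvx (/2) a b).
  assert (mu : lam_union L m).
  { apply Lcl. intros eps he. destruct (cvp_dist _ _ ha eps he) as [N1 H1].
    destruct (cvp_dist _ _ hb eps he) as [N2 H2].
    exists (cvx (/2) (fst (u (max N1 N2))) (snd (u (max N1 N2)))). split.
    - exists (fst (u (max N1 N2))), (snd (u (max N1 N2))). split; auto. exists (/2). split; [lra|reflexivity].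
    - rewrite dist_sym. eapply Rle_lt_trans. apply dist_cvx. lra.
      specialize (H1 (max N1 N2) ltac:(lia)). specialize (H2 (max N1 N2) ltac:(lia)). lra. }
  destruct mu as [c [e [Lce [s [hs hm]]]]].
  fold (cvx s c e) in hm.
  destruct (Lcirc _ _ Lce) as [cc ce].
  destruct (classic (same_chord a b c e)) as [hsame|hns].
  { destruct hsame as [[-> ->]|[-> ->]]; auto. }
  exfalso.
  assert (mo : in_open_disk m) by (apply cvx_open; auto; lra).
  assert (hce : c <> e).
  { intro E. subst e. apply (not_open_circle c cc).
    replace (cvx s c c) with c in hm by (apply pt_eq; unfold cvx; simpl; ring). rewrite <- hm. exact mo. }
  assert (s0 : s <> 0).
  { intro E. subst s. apply (not_open_circle c cc).
    replace (cvx 0 c e) with c in hm by (apply pt_eq; unfold cvx; simpl; ring). rewrite <- hm. exact mo. }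
  assert (s1 : s <> 1).
  { intro E. subst s. apply (not_open_circle e ce).
    replace (cvx 1 c e) with e in hm by (apply pt_eq; unfold cvx; simpl; ring). rewrite <- hm. exact mo. }
  assert (P1 : orient a b c * orient a b e < 0).
  { assert (Z : (1 - s) * orient a b c + s * orient a b e = 0).
    { rewrite <- O_cvx, <- hm. unfold m. apply O_self_cvx. }
    destruct (Req_dec (orient a b c) 0) as [Z1|Z1].
    - exfalso. assert (Z2 : orient a b e = 0).
      { rewrite Z1 in Z. apply (Rmult_eq_reg_l s); [lra|]. lra. }
      destruct (O_line a b c ca cb cc hab Z1); destruct (O_line a b e ca cb ce hab Z2); subst;
      try congruence; apply hns; [left|right]; auto.
    - assert (0 < s < 1) by lra.
      assert (s * (orient a b c * orient a b e) = - (1 - s) * (orient a b c * orient a b c)) by nra.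
      assert (0 < orient a b c * orient a b c) by (assert (h := Rle_0_sqr (orient a b c)); unfold Rsqr in h;
        destruct (Rle_lt_or_eq_dec _ _ h); auto; exfalso; apply Z1; symmetry in e0; apply Rmult_integral in e0; tauto).
      nra. }
  assert (P2 : orient c e a * orient c e b < 0).
  { assert (Z : (1 - /2) * orient c e a + /2 * orient c e b = 0).
    { rewrite <- O_cvx. fold m. rewrite hm. apply O_self_cvx. }
    destruct (Req_dec (orient c e a) 0) as [Z1|Z1].
    - exfalso. assert (Z2 : orient c e b = 0) by lra.
      destruct (O_line c e a cc ce ca hce Z1); destruct (O_line c e b cc ce cb hce Z2); subst;
      try congruence; apply hns; [left|right]; auto.
    - assert (0 < orient c e a * orient c e a) by (assert (h := Rle_0_sqr (orient c e a)); unfold Rsqr in h;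
        destruct (Rle_lt_or_eq_dec _ _ h); auto; exfalso; apply Z1; symmetry in e0; apply Rmult_integral in e0; tauto).
      nra. }
  assert (C1 := CV_mult _ _ _ _ (cv_O _ _ _ _ _ _ ha hb (cvp_const c)) (cv_O _ _ _ _ _ _ ha hb (cvp_const e))).
  assert (C2 := CV_mult _ _ _ _ (cv_O _ _ _ _ _ _ (cvp_const c) (cvp_const e) ha)
                                (cv_O _ _ _ _ _ _ (cvp_const c) (cvp_const e) hb)).
  destruct (cv_neg _ _ C1 P1) as [N1 H1]. destruct (cv_neg _ _ C2 P2) as [N2 H2].
  set (n := max N1 N2). specialize (H1 n ltac:(lia)). specialize (H2 n ltac:(lia)). simpl in H1, H2.
  destruct (segs_meet _ _ _ _ H1 H2) as [lam [hl hseg]].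
  assert (hn : fst (u n) <> snd (u n)).
  { intro E. rewrite E in H1. unfold orient in H1. nra. }
  destruct (Lcirc _ _ (hu n)) as [c1 c2].
  apply (Lnc _ _ _ _ (hu n) Lce). split.
  - intros [[E1 E2]|[E1 E2]].
    + rewrite E1 in H2. rewrite orient_at_l in H2. lra.
    + rewrite E1 in H2. rewrite orient_at_r in H2. lra.
  - exists (cvx lam (fst (u n)) (snd (u n))). split; [apply cvx_open; auto|]. split; auto.
    exists lam. split; [lra|reflexivity].
Qed.

Definition cnt (S : ch -> Prop) : Prop :=
  exists en : nat -> ch, forall x, S x -> exists n, same x (en n).
Definition fin (S : ch -> Prop) : Prop :=
  exists k (en : nat -> ch), forall x, S x -> exists n, (n < k)%nat /\ same x (en n).

Lemma cnt_countable (R : pt -> pt -> Prop) : countable_chords R <-> cnt (fun x => R (fst x) (snd x)).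
Proof.
  split.
  - intros [en H]. exists en. intros x hx. apply H, hx.
  - intros [en H]. exists en. intros a b h. apply (H (a, b)), h.
Qed.

Lemma cnt_mono (S T : ch -> Prop) : cnt T -> (forall x, S x -> exists y, T y /\ same x y) -> cnt S.
Proof.
  intros [en H] h. exists en. intros x hx. destruct (h x hx) as [y [hy s]].
  destruct (H y hy) as [n hn]. exists n. eapply same_trans; eauto.
Qed.

Lemma cnt_sub (S T : ch -> Prop) : cnt T -> (forall x, S x -> T x) -> cnt S.
Proof. intros h1 h2. apply (cnt_mono S T h1). intros x hx. exists x. split; auto. apply same_refl. Qed.

Lemma fin_mono (S T : ch -> Prop) : fin T -> (forall x, S x -> exists y, T y /\ same x y) -> fin S.
Proof.
  intros [k [en H]] h. exists k, en. intros x hx. destruct (h x hx) as [y [hy s]].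
  destruct (H y hy) as [n hn]. exists n. split; [apply hn|]. eapply same_trans; eauto. apply hn.
Qed.

Lemma fin_sub (S T : ch -> Prop) : fin T -> (forall x, S x -> T x) -> fin S.
Proof. intros h1 h2. apply (fin_mono S T h1). intros x hx. exists x. split; auto. apply same_refl. Qed.

Lemma fin_cnt S : fin S -> cnt S.
Proof. intros [k [en H]]. exists en. intros x hx. destruct (H x hx) as [n [_ h]]. eauto. Qed.

Lemma cnt_union (S : nat -> ch -> Prop) : (forall k, cnt (S k)) -> cnt (fun x => exists k, S k x).
Proof.
  intro h. destruct (choice (fun k en => forall x, S k x -> exists n, same x (en n)) h) as [E HE].
  exists (fun m => E (fst (of_nat m)) (snd (of_nat m))).
  intros x [k hk]. destruct (HE k x hk) as [n hn]. exists (to_nat (k, n)).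
  rewrite cancel_of_to. simpl. exact hn.
Qed.

Lemma fin_union S T : fin S -> fin T -> fin (fun x => S x \/ T x).
Proof.
  intros [k1 [e1 H1]] [k2 [e2 H2]].
  exists (k1 + k2)%nat, (fun n => if Nat.ltb n k1 then e1 n else e2 (n - k1)%nat).
  intros x [hx|hx].
  - destruct (H1 x hx) as [n [hn s]]. exists n. split. lia.
    destruct (Nat.ltb_spec n k1); [exact s|lia].
  - destruct (H2 x hx) as [n [hn s]]. exists (n + k1)%nat. split. lia.
    destruct (Nat.ltb_spec (n + k1) k1); [lia|]. replace (n + k1 - k1)%nat with n by lia. exact s.
Qed.

Lemma fin_empty S : (forall x, ~ S x) -> fin S.
Proof. intro h. exists O, (fun _ => (origin, origin)). intros x hx. exfalso; eapply h; eauto. Qed.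

Lemma fin_pair x1 x2 : fin (fun x => same x x1 \/ same x x2).
Proof.
  exists 2%nat, (fun n => if Nat.eqb n 0 then x1 else x2). intros x [h|h].
  exists O. split; auto. exists 1%nat. split; auto.
Qed.

Lemma ev2 n : (Nat.even (2 * n) = true /\ Nat.even (S (2 * n)) = false /\
  Nat.div2 (2 * n) = n /\ Nat.div2 (S (2 * n)) = n)%nat.
Proof.
  split. apply Nat.even_even. split. replace (S (2 * n)) with (2 * n + 1)%nat by lia. apply Nat.even_odd.
  split. apply Nat.div2_double. apply Nat.div2_succ_double.
Qed.

Definition fib2 (F : ch -> ch) (S : ch -> Prop) : Prop :=
  forall y, exists x1 x2, forall x, S x -> same (F x) y -> same x x1 \/ same x x2.

Lemma cnt_fib2 F S T : cnt T -> (forall x, S x -> T (F x)) -> fib2 F S -> cnt S.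
Proof.
  intros [en H] hST hf.
  destruct (choice (fun y p => forall x, S x -> same (F x) y -> same x (fst p) \/ same x (snd p))) as [c hc].
  { intro y. destruct (hf y) as [x1 [x2 h]]. exists (x1, x2). exact h. }
  exists (fun m => if Nat.even m then fst (c (en (Nat.div2 m))) else snd (c (en (Nat.div2 m)))).
  intros x hx. destruct (H (F x) (hST x hx)) as [n hn].
  destruct (hc (en n) x hx hn) as [h|h].
  - exists (2 * n)%nat. destruct (ev2 n) as [a1 [b1 [c1 e1]]]. cbv beta. rewrite a1, c1. exact h.
  - exists (Datatypes.S (2 * n))%nat. destruct (ev2 n) as [a1 [b1 [c1 e1]]]. cbv beta. rewrite b1, e1. exact h.
Qed.

Lemma fin_fib2 F S T : fin T -> (forall x, S x -> T (F x)) -> fib2 F S -> fin S.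
Proof.
  intros [k [en H]] hST hf.
  destruct (choice (fun y p => forall x, S x -> same (F x) y -> same x (fst p) \/ same x (snd p))) as [c hc].
  { intro y. destruct (hf y) as [x1 [x2 h]]. exists (x1, x2). exact h. }
  exists (2 * k)%nat, (fun m => if Nat.even m then fst (c (en (Nat.div2 m))) else snd (c (en (Nat.div2 m)))).
  intros x hx. destruct (H (F x) (hST x hx)) as [n [hk hn]].
  destruct (hc (en n) x hx hn) as [h|h].
  - exists (2 * n)%nat. split. lia. destruct (ev2 n) as [a1 [b1 [c1 e1]]]. cbv beta. rewrite a1, c1. exact h.
  - exists (Datatypes.S (2 * n))%nat. split. lia. destruct (ev2 n) as [a1 [b1 [c1 e1]]]. cbv beta. rewrite b1, e1. exact h.
Qed.

Lemma pigeon : forall k (g : nat -> nat), (forall i, (i <= k)%nat -> (g i < k)%nat) ->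
  exists i j, (i < j <= k)%nat /\ g i = g j.
Proof.
  induction k; intros g h.
  - specialize (h O (le_n 0)). lia.
  - destruct (classic (exists i, (i < S k)%nat /\ g i = g (S k))) as [[i [hi e]]|hn].
    + exists i, (S k). split; [lia|exact e].
    + set (g' := fun i => if Nat.eqb (g i) k then g (S k) else g i).
      destruct (IHk g') as [i [j [hij e]]].
      * intros i hi. unfold g'. destruct (Nat.eqb_spec (g i) k).
        -- assert (g (S k) <> k) by (intro E; apply hn; exists i; split; [lia|congruence]).
           specialize (h (S k) (le_n _)). lia.
        -- specialize (h i ltac:(lia)). lia.
      * exists i, j. split; [lia|]. unfold g' in e.
        destruct (Nat.eqb_spec (g i) k), (Nat.eqb_spec (g j) k); try congruence.
        -- exfalso. apply hn. exists j. split; [lia|congruence].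
        -- exfalso. apply hn. exists i. split; [lia|congruence].
Qed.

Lemma not_fin_seq S (f : nat -> ch) : (forall i j, (i < j)%nat -> ~ same (f i) (f j)) ->
  (forall i, S (f i)) -> ~ fin S.
Proof.
  intros hd hS [k [en H]].
  destruct (choice (fun i n => (n < k)%nat /\ same (f i) (en n))) as [g hg].
  { intro i. destruct (H (f i) (hS i)) as [n hn]. exists n. exact hn. }
  destruct (pigeon k g) as [i [j [hij e]]]. intros i _; apply hg.
  apply (hd i j ltac:(lia)). destruct (hg i) as [_ h1]. destruct (hg j) as [_ h2].
  rewrite e in h1. eapply same_trans; eauto. apply same_sym; auto.
Qed.

Lemma choose_seq (P : nat -> (nat -> ch) -> ch -> Prop) :
  (forall n f f' x, (forall i, (i < n)%nat -> f i = f' i) -> P n f x -> P n f' x) ->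
  (forall n f, exists x, P n f x) -> exists g : nat -> ch, forall n, P n g (g n).
Proof.
  intros hloc hex. destruct (choice (fun (p : nat * (nat -> ch)) x => P (fst p) (snd p) x)) as [c hc].
  { intros [n f]. apply hex. }
  set (h := fix h n := match n with
                     | O => fun _ : nat => (origin, origin)
                     | S m => fun i => if Nat.ltb i m then h m i else c (m, h m) end).
  assert (H1 : forall n i, (i < n)%nat -> h (S n) i = h n i).
  { intros n i hi. simpl. destruct (Nat.ltb_spec i n); [reflexivity|lia]. }
  assert (H2 : forall n m i, (i < n)%nat -> (n <= m)%nat -> h m i = h n i).
  { intros n m i hi hm. induction hm. reflexivity. rewrite H1 by lia. exact IHhm. }
  exists (fun i => h (S i) i). intro n.
  assert (E : (fun i => h (S i) i) n = c (n, h n)).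
  { simpl. destruct (Nat.ltb_spec n n); [lia|reflexivity]. }
  rewrite E. apply (hloc n (h n)). intros i hi. cbv beta. apply (H2 (S i) n i); lia.
  apply (hc (n, h n)).
Qed.

Lemma not_fin_avoid S : ~ fin S -> forall k (en : nat -> ch), exists x, S x /\ forall n, (n < k)%nat -> ~ same x (en n).
Proof.
  intros h k en. apply NNPP. intro hn. apply h. exists k, en. intros x hx.
  apply NNPP. intro h2. apply hn. exists x. split; auto. intros n hk hs. apply h2. eauto.
Qed.

Lemma cnt_swap_closed S : cnt S -> cnt (fun x => S (swap x)).
Proof.
  intros [en H]. exists en. intros x hx. destruct (H _ hx) as [n hn]. exists n.
  eapply same_trans; [apply same_swap|exact hn].
Qed.

Definition zof (n : nat) : Z := (Z.of_nat (fst (of_nat n)) - Z.of_nat (snd (of_nat n)))%Z.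
Lemma zof_surj z : exists n, zof n = z.
Proof. exists (to_nat (Z.to_nat z, Z.to_nat (- z))). unfold zof. rewrite cancel_of_to. simpl. lia. Qed.

Definition gp (z1 z2 : Z) (m : nat) : pt := (IZR z1 / INR (S m), IZR z2 / INR (S m)).

Definition box (n : nat) : ch * nat :=
  let (a, r1) := of_nat n in let (b, r2) := of_nat r1 in let (c, r3) := of_nat r2 in
  let (e, m) := of_nat r3 in ((gp (zof a) (zof b) m, gp (zof c) (zof e) m), m).

Lemma box_surj z1 z2 z3 z4 m : exists n, box n = ((gp z1 z2 m, gp z3 z4 m), m).
Proof.
  destruct (zof_surj z1) as [a ha]. destruct (zof_surj z2) as [b hb].
  destruct (zof_surj z3) as [c hc]. destruct (zof_surj z4) as [e he].
  exists (to_nat (a, to_nat (b, to_nat (c, to_nat (e, m))))). unfold box.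
  rewrite !cancel_of_to. subst. reflexivity.
Qed.

Lemma approx t m : exists z, Rabs (t - IZR z / INR (S m)) <= / INR (S m).
Proof.
  assert (hM : 0 < INR (S m)) by (apply lt_0_INR; lia).
  destruct (archimed (t * INR (S m))) as [h1 h2]. exists (up (t * INR (S m))).
  set (z := IZR (up (t * INR (S m)))) in *. set (M := INR (S m)) in *.
  assert (E : t - z / M = (t * M - z) * / M) by (field; lra).
  rewrite E. assert (0 < / M) by (apply Rinv_0_lt_compat; lra).
  apply Rabs_le. split; nra.
Qed.

Lemma approx_pt p m : exists z1 z2, dist p (gp z1 z2 m) <= 2 / INR (S m).
Proof.
  destruct (approx (fst p) m) as [z1 h1]. destruct (approx (snd p) m) as [z2 h2].
  exists z1, z2. eapply Rle_trans. apply dist_le_abs. unfold gp; cbn [fst snd]. unfold Rdiv in *. lra.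
Qed.

Lemma cond_cnt SS : (forall x, SS x -> exists delta, 0 < delta /\ cnt (fun y => SS y /\ rho x y < delta)) -> cnt SS.
Proof.
  intro H.
  set (T := fun n y => let g := fst (box n) in let r := 3 / INR (S (snd (box n))) in
     cnt (fun y => SS y /\ rho g y < r) /\ SS y /\ rho g y < r).
  apply (cnt_sub SS (fun y => exists n, T n y)).
  - apply cnt_union. intro n. destruct (classic (cnt (fun y => SS y /\ rho (fst (box n)) y < 3 / INR (S (snd (box n))))))
      as [h|h].
    + apply (cnt_sub _ _ h). intros y [_ hy]. exact hy.
    + exists (fun _ => (origin, origin)). intros y [hy _]. contradiction.
  - intros x hx. destruct (H x hx) as [delta [hd hc]].
    destruct (archimed_cor1 (delta / 6)) as [m [hm hm0]]. lra.
    assert (hM : 0 < INR (S m)) by (apply lt_0_INR; lia).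
    assert (hMm : / INR (S m) < delta / 6).
    { eapply Rle_lt_trans; [|exact hm]. apply Rinv_le_contravar. apply lt_0_INR; lia. apply le_INR; lia. }
    destruct (approx_pt (fst x) m) as [z1 [z2 e1]]. destruct (approx_pt (snd x) m) as [z3 [z4 e2]].
    destruct (box_surj z1 z2 z3 z4 m) as [n hn]. exists n. unfold T. rewrite hn. simpl fst. simpl snd.
    set (g := (gp z1 z2 m, gp z3 z4 m)).
    assert (hg : rho g x <= 2 / INR (S m)).
    { apply rho_le_char. left. simpl. rewrite !(dist_sym (gp _ _ m)). split; auto. }
    assert (hg3 : rho g x < 3 / INR (S m)).
    { eapply Rle_lt_trans. exact hg. unfold Rdiv. apply Rmult_lt_compat_r. apply Rinv_0_lt_compat; auto. lra. }
    split; [|split; auto].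
    apply (cnt_sub _ _ hc). intros y [hy hr]. split; auto.
    eapply Rle_lt_trans. apply (rho_tri x g y). rewrite rho_sym.
    unfold Rdiv in *. lra.
Qed.

Definition third_step (p : R * R) (v : R) : R * R :=
  let w := (snd p - fst p) / 3 in
  if Rle_dec v (fst p + w) then (snd p - w, snd p) else (fst p, fst p + w).

Lemma R_uncount (en : nat -> R) x y : x < y -> exists t, x <= t <= y /\ forall n, t <> en n.
Proof.
  intro hxy.
  set (iv := fix iv n := match n with O => (x, y) | S k => third_step (iv k) (en k) end).
  assert (TS : forall p v, fst p < snd p -> fst (third_step p v) < snd (third_step p v) /\
     fst p <= fst (third_step p v) /\ snd (third_step p v) <= snd p /\
     (v < fst (third_step p v) \/ snd (third_step p v) < v)).
  { intros p v hp. unfold third_step. destruct Rle_dec; simpl; lra. }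
  assert (P0 : forall n, fst (iv n) < snd (iv n)).
  { induction n. simpl; lra. apply (TS (iv n) (en n) IHn). }
  assert (P : forall n, fst (iv n) < snd (iv n) /\ fst (iv n) <= fst (iv (S n)) /\ snd (iv (S n)) <= snd (iv n)
     /\ (en n < fst (iv (S n)) \/ snd (iv (S n)) < en n)).
  { intro n. split; [apply P0|]. apply (TS (iv n) (en n) (P0 n)). }
  assert (Mn : forall n k, (n <= k)%nat -> fst (iv n) <= fst (iv k) /\ snd (iv k) <= snd (iv n)).
  { intros n k hk. induction hk. lra. destruct (P m) as [_ [b [c _]]]. lra. }
  assert (LR : forall n k, fst (iv n) <= snd (iv k)).
  { intros n k. destruct (Mn n (max n k) ltac:(lia)). destruct (Mn k (max n k) ltac:(lia)).
    destruct (P (max n k)) as [a _]. lra. }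
  destruct (growing_cv (fun n => fst (iv n))) as [t ht].
  - intro n. apply (P n).
  - exists y. intros r [i ->]. assert (h := LR i O). simpl in h. exact h.
  - exists t. assert (A : forall n, fst (iv n) <= t /\ t <= snd (iv n)).
    { intro n. split.
      - apply (cv_ge (fun n => fst (iv n)) t _ n); auto. intros k hk. apply Mn; lia.
      - apply (cv_le (fun n => fst (iv n)) t _ O); auto. }
    split. destruct (A O) as [a1 a2]. simpl in a1, a2. lra.
    intros n E. destruct (A (S n)). destruct (P n) as [_ [_ [_ h]]]. lra.
Qed.

Definition upar (s : R) : pt := ((1 - s * s) / (1 + s * s), 2 * s / (1 + s * s)).

Lemma upar_circle s : on_circle (upar s).
Proof. unfold on_circle, upar; simpl. assert (0 < 1 + s * s) by nra. field. lra. Qed.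

Lemma upar_inj s s' : upar s = upar s' -> s = s'.
Proof.
  intro E. assert (h1 := f_equal fst E). assert (h2 := f_equal snd E). unfold upar in h1, h2; simpl in h1, h2.
  assert (p1 : 0 < 1 + s * s) by nra. assert (p2 : 0 < 1 + s' * s') by nra.
  assert (k : forall r, 0 < 1 + r * r -> r = (2 * r / (1 + r * r)) / (1 + (1 - r * r) / (1 + r * r))).
  { intros r hr. field. lra. }
  rewrite (k s p1), (k s' p2), h1, h2. reflexivity.
Qed.

Lemma upar_dist s : dist (upar s) one <= 2 * Rabs s.
Proof.
  apply dist_le_D2. assert (h := Rabs_pos s). lra.
  replace (2 * Rabs s * (2 * Rabs s)) with (4 * (s * s)) by (rewrite <- (sq_abs_eq s); ring).
  unfold D2, upar, one; simpl. assert (0 < 1 + s * s) by nra.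
  replace (((1 - s * s) / (1 + s * s) - 1) * ((1 - s * s) / (1 + s * s) - 1) +
    (2 * s / (1 + s * s) - 0) * (2 * s / (1 + s * s) - 0)) with (4 * (s * s) / (1 + s * s)) by (field; lra).
  unfold Rdiv. assert (0 <= s * s) by nra. assert (/ (1 + s * s) <= 1).
  { rewrite <- Rinv_1. apply Rinv_le_contravar; lra. }
  assert (0 <= 4 * (s * s)) by lra. nra.
Qed.

Lemma arc_uncnt a delta : on_circle a -> 0 < delta ->
  ~ cnt (fun y => fst y = snd y /\ on_circle (fst y) /\ dist (fst y) a < delta).
Proof.
  intros ha hd [en H].
  set (c := fun s => cmul a (upar s)).
  set (re := fun n => match excluded_middle_informative (exists s, c s = fst (en n)) with
                      | left h => proj1_sig (constructive_indefinite_description _ h)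
                      | right _ => 0 end).
  destruct (R_uncount re 0 (delta / 4)) as [t [ht hn]]. lra.
  destruct (H (c t, c t)) as [n hs].
  - simpl. split; auto. split. apply on_circle_cmul; auto. apply upar_circle.
    unfold c. rewrite <- (cmul_one a) at 2. rewrite dist_cmul by auto.
    eapply Rle_lt_trans. apply upar_dist. rewrite Rabs_right by lra. lra.
  - assert (E : fst (en n) = c t).
    { unfold same, same_chord in hs; cbn [fst snd] in hs. destruct hs as [[h1 _]|[_ h1]]; symmetry; exact h1. }
    apply (hn n). unfold re. destruct excluded_middle_informative as [h|h].
    + destruct constructive_indefinite_description as [s hs']. simpl.
      rewrite E in hs'. unfold c in hs'. apply cmul_cancel in hs'; auto. symmetry. apply upar_inj; auto.
    + exfalso. apply h. exists t. auto.
Qed.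

Record Sm := {
  small : (ch -> Prop) -> Prop;
  sm_mono : forall S T, small T -> (forall x, S x -> exists y, T y /\ same x y) -> small S;
  sm_fib : forall F S T, small T -> (forall x, S x -> T (F x)) -> fib2 F S -> small S;
  sm_arc : forall a delta, on_circle a -> 0 < delta ->
     ~ small (fun y => fst y = snd y /\ on_circle (fst y) /\ dist (fst y) a < delta)
}.

Lemma sm_sub (Q : Sm) S T : small Q T -> (forall x, S x -> T x) -> small Q S.
Proof. intros h1 h2. apply (sm_mono Q S T h1). intros x hx. exists x. split; auto. apply same_refl. Qed.

Definition Lc (L : pt -> pt -> Prop) (x : ch) : Prop := L (fst x) (snd x).
Definition sc (d : nat) (x : ch) : ch := (sigma d (fst x), sigma d (snd x)).
Definition nb (L : pt -> pt -> Prop) (x : ch) (delta : R) : ch -> Prop :=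
  fun y => Lc L y /\ rho x y < delta.
Definition PB (Q : Sm) (L : pt -> pt -> Prop) (x : ch) : Prop :=
  Lc L x /\ forall delta, 0 < delta -> ~ small Q (nb L x delta).
Definition partH (Q : Sm) (L : pt -> pt -> Prop) (a b : pt) : Prop :=
  L a b /\ forall eps, 0 < eps -> ~ small Q (fun y => Lc L y /\ hclose eps a b (fst y) (snd y)).
Definition oncirc (x : ch) : Prop := on_circle (fst x) /\ on_circle (snd x).

Lemma lam_circ L x : lamination L -> Lc L x -> oncirc x.
Proof. intros [_ [h _]] hx. apply h, hx. Qed.

Lemma partH_PB Q L a b : lamination L -> (partH Q L a b <-> PB Q L (a, b)).
Proof.
  intro hL. split.
  - intros [hab H]. split; [exact hab|]. intros delta hd hs.
    destruct (hclose_rho_eps delta hd) as [eps [he K]].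
    apply (H eps he). apply (sm_sub Q _ _ hs). intros y [hy hc]. split; auto.
    destruct (lam_circ L (a,b) hL hab). destruct (lam_circ L y hL hy).
    apply (K (a, b) y); auto.
  - intros [hab H]. split; [exact hab|]. intros eps he hs. apply (H eps he).
    apply (sm_sub Q _ _ hs). intros y [hy hr]. split; auto. apply (near_hclose (a,b) y eps hr).
Qed.

Lemma PB_swap Q L x : lamination L -> PB Q L x -> PB Q L (swap x).
Proof.
  intros hL [hx H]. split. apply (proj1 hL), hx.
  intros delta hd hs. apply (H delta hd). apply (sm_sub Q _ _ hs).
  intros y [hy hr]. split; auto. rewrite rho_swap_l. exact hr.
Qed.

Lemma cvc_rho u l : cvc u l -> forall e, 0 < e -> exists N, forall n, (n >= N)%nat -> rho (u n) l < e.
Proof.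
  intros [h1 h2] e he. destruct (cvp_dist _ _ h1 e he) as [N1 H1]. destruct (cvp_dist _ _ h2 e he) as [N2 H2].
  exists (max N1 N2). intros n hn. apply rho_lt_char. left. split; [apply H1|apply H2]; lia.
Qed.

Lemma PB_closed Q L u l : lamination L -> (forall n, PB Q L (u n)) -> cvc u l -> PB Q L l.
Proof.
  intros hL hu hc. split.
  - apply (leaf_lim L u l hL); auto. intro n; apply (hu n).
  - intros delta hd hs. destruct (cvc_rho u l hc (delta/2)) as [N HN]. lra.
    apply (proj2 (hu N) (delta/2)). lra. apply (sm_sub Q _ _ hs).
    intros y [hy hr]. split; auto. specialize (HN N (le_n _)).
    assert (T := rho_tri l (u N) y). rewrite rho_sym in HN. lra.
Qed.

Lemma PB_point Q L a : lamination L -> on_circle a -> PB Q L (a, a).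
Proof.
  intros hL ha. split. apply hL, ha.
  intros delta hd hs. apply (sm_arc Q a delta ha hd). apply (sm_sub Q _ _ hs).
  intros y [e [hy hdist]]. split.
  - unfold Lc. rewrite <- e. apply hL, hy.
  - apply rho_lt_char. left. simpl. rewrite <- e. rewrite dist_sym. auto.
Qed.

Lemma orient_near x y delta : rho x y < delta ->
  exists oy, same y oy /\ dist (fst oy) (fst x) < delta /\ dist (snd oy) (snd x) < delta.
Proof.
  intro h. apply rho_lt_char in h. destruct h as [[h1 h2]|[h1 h2]].
  - exists y. split. apply same_refl. rewrite (dist_sym (fst y)), (dist_sym (snd y)). auto.
  - exists (swap y). split. apply same_swap. simpl. rewrite (dist_sym (fst y)), (dist_sym (snd y)). auto.
Qed.

Lemma sc_swap d y : sc d (swap y) = swap (sc d y).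
Proof. reflexivity. Qed.

Lemma same_sc d y oy : same y oy -> same (sc d y) (sc d oy).
Proof.
  destruct y, oy. unfold same, same_chord, sc. simpl. intros [[-> ->]|[-> ->]]; auto.
Qed.

Lemma fib2_sc d L x delta : (1 <= d)%nat -> lamination L -> oncirc x -> 0 < delta ->
  2 * delta <= / INR d -> fib2 (sc d) (nb L x delta).
Proof.
  intros hd hL [cx1 cx2] hdel hr z.
  set (T1 := fun y => nb L x delta y /\ exists oy, same y oy /\ dist (fst oy) (fst x) < delta /\
                 dist (snd oy) (snd x) < delta /\ sc d oy = z).
  set (T2 := fun y => nb L x delta y /\ exists oy, same y oy /\ dist (fst oy) (fst x) < delta /\
                 dist (snd oy) (snd x) < delta /\ sc d oy = swap z).
  assert (U : forall y y' w, nb L x delta y -> nb L x delta y' ->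
      (exists oy, same y oy /\ dist (fst oy) (fst x) < delta /\ dist (snd oy) (snd x) < delta /\ sc d oy = w) ->
      (exists oy, same y' oy /\ dist (fst oy) (fst x) < delta /\ dist (snd oy) (snd x) < delta /\ sc d oy = w) ->
      same y y').
  { intros y y' w [hy _] [hy' _] [oy [s1 [d1 [d2 e1]]]] [oy' [s2 [d3 [d4 e2]]]].
    assert (co : oncirc oy).
    { destruct (lam_circ L y hL hy). destruct y, oy; unfold same, same_chord in s1; simpl in *.
      destruct s1 as [[<- <-]|[<- <-]]; split; auto. }
    assert (co' : oncirc oy').
    { destruct (lam_circ L y' hL hy'). destruct y', oy'; unfold same, same_chord in s2; simpl in *.
      destruct s2 as [[<- <-]|[<- <-]]; split; auto. }
    assert (E : oy = oy').
    { rewrite <- e2 in e1. unfold sc in e1. injection e1 as f1 f2.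
      destruct co, co'.
      assert (t1 := dist_triangle (fst oy) (fst x) (fst oy')).
      assert (t2 := dist_triangle (snd oy) (snd x) (snd oy')).
      rewrite (dist_sym (fst x)) in t1. rewrite (dist_sym (snd x)) in t2.
      destruct oy as [p1 p2], oy' as [q1 q2]; simpl in *. f_equal.
      - apply (loc_inj d); auto. unfold Rdiv. lra.
      - apply (loc_inj d); auto. unfold Rdiv. lra. }
    subst oy'. eapply same_trans; eauto. apply same_sym; auto. }
  exists (match excluded_middle_informative (exists y, T1 y) with
          | left h => proj1_sig (constructive_indefinite_description _ h) | right _ => x end).
  exists (match excluded_middle_informative (exists y, T2 y) with
          | left h => proj1_sig (constructive_indefinite_description _ h) | right _ => x end).
  intros y hy hs. destruct hy as [hyL hyr].
  destruct (orient_near x y delta hyr) as [oy [so [o1 o2]]].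
  assert (hs' : same (sc d oy) z) by (eapply same_trans; [apply same_sym, same_sc, so|exact hs]).
  destruct (sc d oy) as [s1 s2] eqn:Eo. destruct z as [z1 z2].
  unfold same, same_chord in hs'. simpl in hs'.
  destruct hs' as [[-> ->]|[-> ->]].
  - left. destruct excluded_middle_informative as [h|h].
    + destruct constructive_indefinite_description as [y1 [hy1 hy1']]. simpl.
      apply (U y y1 (z1, z2)); auto. split; auto. exists oy; auto.
    + exfalso. apply h. exists y. split. split; auto. exists oy; auto.
  - right. destruct excluded_middle_informative as [h|h].
    + destruct constructive_indefinite_description as [y1 [hy1 hy1']]. simpl.
      apply (U y y1 (z2, z1)); auto. split; auto. exists oy; auto.
    + exfalso. apply h. exists y. split. split; auto. exists oy; auto.
Qed.

Definition sibc (d : nat) (L : pt -> pt -> Prop) (f : nat -> ch) : Prop :=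
  (forall i, (i < d)%nat -> Lc L (f i)) /\
  (forall i j, (i < d)%nat -> (j < d)%nat -> i <> j -> disjoint_chords (f i) (f j)) /\
  (forall i, (i < d)%nat -> same (sc d (f i)) (sc d (f O))).

Lemma cvc_sc d u l : cvc u l -> cvc (fun n => sc d (u n)) (sc d l).
Proof. intros [h1 h2]. split; apply cvp_sigma; auto. Qed.

Lemma cvc_swap u l : cvc u l -> cvc (fun n => swap (u n)) (swap l).
Proof. intros [h1 h2]. split; auto. Qed.

Lemma same_lim u v l m : cvc u l -> cvc v m -> (forall n, same (u n) (v n)) -> same l m.
Proof.
  intros [u1 u2] [v1 v2] H.
  set (Q := fun (a b c e : pt) => (D2 a c + D2 b e) * (D2 a e + D2 b c)).
  assert (Z : Q (fst l) (snd l) (fst m) (snd m) = 0).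
  { apply (cv_eq (fun n => Q (fst (u n)) (snd (u n)) (fst (v n)) (snd (v n))) _ 0 O).
    - intros n _. unfold Q. destruct (H n) as [[e1 e2]|[e1 e2]]; rewrite e1, e2; unfold D2; ring.
    - unfold Q. apply CV_mult; apply CV_plus; apply cv_D2; auto. }
  unfold Q in Z. apply Rmult_integral in Z.
  assert (n1 := D2_nonneg (fst l) (fst m)). assert (n2 := D2_nonneg (snd l) (snd m)).
  assert (n3 := D2_nonneg (fst l) (snd m)). assert (n4 := D2_nonneg (snd l) (fst m)).
  unfold same, same_chord. destruct Z as [Z|Z]; [left|right]; split; apply D2_eq0; lra.
Qed.

Lemma cv_evext_eq u v l m N : (forall n, (n >= N)%nat -> u n = v n) -> Un_cv u l -> Un_cv v m -> l = m.
Proof. intros E h1 h2. apply (UL_sequence v); auto. apply (cv_evext u v l N); auto. Qed.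

Lemma cvp_evext_eq u v l m N : (forall n, (n >= N)%nat -> u n = v n) -> cvp u l -> cvp v m -> l = m.
Proof.
  intros E [a b] [c e]. apply pt_eq.
  - apply (cv_evext_eq (fun n => fst (u n)) (fun n => fst (v n)) _ _ N); auto. intros n hn; rewrite E; auto.
  - apply (cv_evext_eq (fun n => snd (u n)) (fun n => snd (v n)) _ _ N); auto. intros n hn; rewrite E; auto.
Qed.

Lemma core d L u v c x y : (1 <= d)%nat -> lamination L ->
  (forall n, Lc L (u n) /\ Lc L (v n)) -> (forall n, disjoint_chords (u n) (v n)) ->
  (forall n, same (sc d (u n)) (sc d (v n))) -> cvc u (c, x) -> cvc v (c, y) ->
  sigma d c <> sigma d x -> False.
Proof.
  intros hd hL hl hdis hs hu hv hne.
  assert (r : 0 < / INR d) by (apply Rinv_0_lt_compat, lt_0_INR; lia).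
  destruct (cvp_dist _ _ (proj1 hu) (/ INR d / 2)) as [N1 H1]. lra.
  destruct (cvp_dist _ _ (proj1 hv) (/ INR d / 2)) as [N2 H2]. lra.
  assert (K : forall n, (n >= max N1 N2)%nat ->
     sigma d (snd (u n)) = sigma d (fst (v n))).
  { intros n hn. specialize (H1 n ltac:(lia)). specialize (H2 n ltac:(lia)). simpl in H1, H2.
    destruct (lam_circ L _ hL (proj1 (hl n))) as [a1 a2].
    destruct (lam_circ L _ hL (proj2 (hl n))) as [b1 b2].
    destruct (hs n) as [[e1 e2]|[e1 e2]]; simpl in e1, e2.
    - exfalso. assert (E : fst (u n) = fst (v n)).
      { apply (loc_inj d); auto. assert (t := dist_triangle (fst (u n)) c (fst (v n))).
        rewrite (dist_sym c) in t. unfold Rdiv. lra. }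
      apply (hdis n). exists (fst (u n)). split. apply seg_left. rewrite E. apply seg_left.
    - exact e2. }
  apply hne. symmetry.
  apply (cvp_evext_eq (fun n => sigma d (snd (u n))) (fun n => sigma d (fst (v n))) _ _ (max N1 N2) K).
  - apply (cvp_sigma d (fun n => snd (u n)) x (proj2 hu)).
  - apply (cvp_sigma d (fun n => fst (v n)) c (proj1 hv)).
Qed.

Lemma share_end L x y : lamination L -> Lc L x -> Lc L y -> ~ disjoint_chords x y ->
  fst x = fst y \/ fst x = snd y \/ snd x = fst y \/ snd x = snd y.
Proof.
  intros hL hx hy hnd. apply NNPP in hnd. destruct hnd as [z [zx zy]].
  destruct (lam_circ L x hL hx) as [cx1 cx2]. destruct (lam_circ L y hL hy) as [cy1 cy2].
  destruct (classic (in_open_disk z)) as [ho|ho].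
  - destruct (classic (same x y)) as [hs|hs].
    + unfold same, same_chord in hs. tauto.
    + exfalso. destruct hL as [_ [_ [_ [hnc _]]]]. apply (hnc _ _ _ _ hx hy). split; [exact hs|].
      exists z. auto.
  - destruct (seg_boundary _ _ z cx1 cx2 zx ho) as [e1|e1];
    destruct (seg_boundary _ _ z cy1 cy2 zy ho) as [e2|e2]; rewrite <- e1, <- e2; tauto.
Qed.

Lemma disjoint_swapl x y : disjoint_chords x y -> disjoint_chords (swap x) y.
Proof. intros h [z [h1 h2]]. apply h. exists z. split; auto. apply seg_sym, h1. Qed.
Lemma disjoint_swapr x y : disjoint_chords x y -> disjoint_chords x (swap y).
Proof. intros h [z [h1 h2]]. apply h. exists z. split; auto. apply seg_sym, h2. Qed.

Lemma same_swap_both x y : same x y -> same (swap x) (swap y).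
Proof. destruct x, y. unfold same, same_chord, swap; simpl. tauto. Qed.

Lemma Lc_swap L x : lamination L -> Lc L x -> Lc L (swap x).
Proof. intros hL h. apply (proj1 hL), h. Qed.

Lemma siblim d L (g : nat -> nat -> ch) h : (1 <= d)%nat -> lamination L ->
  (forall n, sibc d L (g n)) -> (forall i, (i < d)%nat -> cvc (fun n => g n i) (h i)) ->
  sigma d (fst (h O)) <> sigma d (snd (h O)) -> sibc d L h.
Proof.
  intros hd hL hg hc hne.
  assert (hl : forall i, (i < d)%nat -> Lc L (h i)).
  { intros i hi. apply (leaf_lim L (fun n => g n i)); auto. intro n. apply (proj1 (hg n)), hi. }
  assert (hs : forall i, (i < d)%nat -> same (sc d (h i)) (sc d (h O))).
  { intros i hi. apply (same_lim (fun n => sc d (g n i)) (fun n => sc d (g n O))).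
    apply cvc_sc, hc, hi. apply cvc_sc, hc. lia. intro n. apply (proj2 (proj2 (hg n))), hi. }
  split; [exact hl|]. split; [|exact hs].
  intros i j hi hj hij hnd.
  assert (nd : forall k, (k < d)%nat -> sigma d (fst (h k)) <> sigma d (snd (h k))).
  { intros k hk E. apply hne. destruct (hs k hk) as [[e1 e2]|[e1 e2]]; simpl in e1, e2; congruence. }
  assert (Hl : forall n, Lc L (g n i) /\ Lc L (g n j)).
  { intro n. split; apply (proj1 (hg n)); auto. }
  assert (Hd : forall n, disjoint_chords (g n i) (g n j)).
  { intro n. apply (proj1 (proj2 (hg n))); auto. }
  assert (Hs : forall n, same (sc d (g n i)) (sc d (g n j))).
  { intro n. eapply same_trans. apply (proj2 (proj2 (hg n))), hi. apply same_sym, (proj2 (proj2 (hg n))), hj. }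
  assert (ci := hc i hi). assert (cj := hc j hj).
  assert (nd_i := nd i hi). assert (nd_j := nd j hj).
  destruct (share_end L (h i) (h j) hL (hl i hi) (hl j hj) (fun H => H hnd)) as [E|[E|[E|E]]].
  - destruct (h i) as [c x] eqn:Ei, (h j) as [c' y] eqn:Ej. simpl in E. subst c'.
    apply (core d L (fun n => g n i) (fun n => g n j) c x y hd hL Hl Hd Hs ci cj nd_i).
  - destruct (h i) as [c x] eqn:Ei, (h j) as [y c'] eqn:Ej. simpl in E. subst c'.
    apply (core d L (fun n => g n i) (fun n => swap (g n j)) c x y hd hL).
    + intro n. split; [apply Hl|apply Lc_swap, Hl; auto].
    + intro n. apply disjoint_swapr, Hd.
    + intro n. rewrite sc_swap. eapply same_trans. apply Hs. apply same_swap.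
    + exact ci.
    + apply (cvc_swap _ (y, c)), cj.
    + exact nd_i.
  - destruct (h i) as [x c] eqn:Ei, (h j) as [c' y] eqn:Ej. simpl in E. subst c'.
    apply (core d L (fun n => swap (g n i)) (fun n => g n j) c x y hd hL).
    + intro n. split; [apply Lc_swap, Hl; auto|apply Hl].
    + intro n. apply disjoint_swapl, Hd.
    + intro n. rewrite sc_swap. eapply same_trans. apply same_sym, same_swap. apply Hs.
    + apply (cvc_swap _ (x, c)), ci.
    + exact cj.
    + intro e. apply nd_i. simpl. auto.
  - destruct (h i) as [x c] eqn:Ei, (h j) as [y c'] eqn:Ej. simpl in E. subst c'.
    apply (core d L (fun n => swap (g n i)) (fun n => swap (g n j)) c x y hd hL).
    + intro n. split; apply Lc_swap, Hl; auto.
    + intro n. apply disjoint_swapl, disjoint_swapr, Hd.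
    + intro n. rewrite !sc_swap. apply same_swap_both, Hs.
    + apply (cvc_swap _ (x, c)), ci.
    + apply (cvc_swap _ (y, c)), cj.
    + intro e. apply nd_i. simpl. auto.
Qed.

Definition GET2 (Q : Sm) d L : Prop := forall x, PB Q L x -> forall delta, 0 < delta ->
  exists y, PB Q L y /\ rho (sc d y) x < delta.
Definition GET3 (Q : Sm) d L : Prop := forall x, PB Q L x -> sigma d (fst x) <> sigma d (snd x) ->
  forall delta, 0 < delta -> exists f, sibc d L f /\ (forall i, (i < d)%nat -> PB Q L (f i)) /\ rho (f O) x < delta.

Lemma inv_S_pos n : 0 < / INR (S n).
Proof. apply Rinv_0_lt_compat, lt_0_INR; lia. Qed.

Lemma inv_S_mono n m : (n <= m)%nat -> / INR (S m) <= / INR (S n).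
Proof. intro h. apply Rinv_le_contravar. apply lt_0_INR; lia. apply le_INR; lia. Qed.

Lemma inv_S_small e : 0 < e -> exists N, forall n, (n >= N)%nat -> / INR (S n) < e.
Proof.
  intro he. destruct (archimed_cor1 e he) as [N [h1 h2]]. exists N. intros n hn.
  eapply Rle_lt_trans; [|exact h1]. apply Rinv_le_contravar. apply lt_0_INR; lia. apply le_INR; lia.
Qed.

Lemma rho_lim_zero u l x : cvc u l -> (forall n, rho (u n) x < / INR (S n)) -> rho l x = 0.
Proof.
  intros hc H. apply Rle_antisym; [|apply rho_nonneg].
  apply Rnot_lt_le. intro hp.
  destruct (cvc_rho u l hc (rho l x / 2)) as [N1 H1]. lra.
  destruct (inv_S_small (rho l x / 2)) as [N2 H2]. lra.
  specialize (H1 (max N1 N2) ltac:(lia)). specialize (H2 (max N1 N2) ltac:(lia)).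
  specialize (H (max N1 N2)). assert (t := rho_tri l (u (max N1 N2)) x). rewrite rho_sym in H1. lra.
Qed.

Lemma seg_pt p z : seg p p z -> z = p.
Proof. intros [t [_ ->]]. apply pt_eq; simpl; ring. Qed.

Lemma disjoint_pts p q : p <> q -> disjoint_chords (p, p) (q, q).
Proof. intros h [z [h1 h2]]. simpl in *. apply seg_pt in h1. apply seg_pt in h2. congruence. Qed.

Lemma Lc_oncirc L x : lamination L -> Lc L x -> bndc x.
Proof. intros hL h. destruct (lam_circ L x hL h). split; apply bnd_circle; auto. Qed.

Lemma partH_lam Q L : lamination L -> lamination (partH Q L).
Proof.
  intro hL. destruct hL as [Lsym [Lcirc [Lpt [Lnc Lcl]]]] eqn:EL.
  split; [|split; [|split; [|split]]].
  - intros a b h. apply (partH_PB Q L a b hL) in h. apply (partH_PB Q L b a hL).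
    apply (PB_swap Q L (a, b) hL h).
  - intros a b [h _]. apply Lcirc, h.
  - intros a ha. apply (partH_PB Q L a a hL). apply PB_point; auto.
  - intros a b c e [h1 _] [h2 _]. apply Lnc; auto.
  - intros z hz.
    assert (hz' : forall n : nat, exists p : ch * R, PB Q L (fst p) /\ 0 <= snd p <= 1 /\
        dist z (cvx (snd p) (fst (fst p)) (snd (fst p))) < / INR (S n)).
    { intro n. destruct (hz _ (inv_S_pos n)) as [w [[a [b [hab [t [ht ->]]]]] hw]].
      exists ((a, b), t). simpl. split. apply (partH_PB Q L a b hL), hab. split; auto. }
    destruct (choice _ hz') as [P HP].
    destruct (extract_ch (fun n => fst (P n))) as [p1 [hp1 [l hl]]].
    { intro n. apply (Lc_oncirc L), (HP n). exact hL. }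
    destruct (extract1 (fun n => snd (P (p1 n)))) as [p2 [hp2 [t ht]]].
    { intro n. destruct (HP (p1 n)) as [_ [h _]]. lra. }
    set (phi := fun n => p1 (p2 n)).
    assert (hphi : incr phi) by (unfold phi; apply incr_comp; auto).
    assert (cl : cvc (fun n => fst (P (phi n))) l) by (apply (cvc_sub (fun n => fst (P (p1 n)))); auto).
    assert (PBl : PB Q L l) by (apply (PB_closed Q L (fun n => fst (P (phi n)))); auto; intro; apply HP).
    assert (t01 : 0 <= t <= 1).
    { split. apply (cv_ge (fun n => snd (P (p1 (p2 n)))) t 0 O); [|exact ht]. intros; apply HP.
      apply (cv_le (fun n => snd (P (p1 (p2 n)))) t 1 O); [|exact ht]. intros; apply HP. }
    assert (C1 : cvp (fun n => cvx (snd (P (phi n))) (fst (fst (P (phi n)))) (snd (fst (P (phi n)))))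
                     (cvx t (fst l) (snd l))).
    { destruct cl as [[c1 c2] [c3 c4]]. unfold cvx. split; simpl;
      apply CV_plus; apply CV_mult; auto; try (apply CV_minus; auto; apply cv_const). }
    assert (C2 : cvp (fun n => cvx (snd (P (phi n))) (fst (fst (P (phi n)))) (snd (fst (P (phi n))))) z).
    { apply dist_cvp. intros e he. destruct (inv_S_small e he) as [N HN]. exists N. intros n hn.
      rewrite dist_sym. eapply Rlt_le_trans. apply HP. apply Rlt_le.
      eapply Rle_lt_trans; [|apply (HN n hn)]. apply inv_S_mono. apply incr_ge; auto. }
    assert (E := cvp_uniq _ _ _ C2 C1).
    exists (fst l), (snd l). split. apply (partH_PB Q L _ _ hL). destruct l; exact PBl.
    exists t. split; auto.
Qed.

Lemma sib_lam d L : sibling_invariant d L -> lamination L.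
Proof. intros [h _]. exact h. Qed.

Lemma PB_image Q d L x : (1 <= d)%nat -> sibling_invariant d L -> PB Q L x -> PB Q L (sc d x).
Proof.
  intros hd hS [hx H]. assert (hL := sib_lam d L hS). destruct hS as [_ [S1 _]].
  split. apply S1, hx.
  intros delta hdel hs.
  assert (hD : 0 < INR d) by (apply lt_0_INR; lia).
  set (eta := Rmin (delta / (2 * INR d)) (/ (2 * INR d))).
  assert (he : 0 < eta) by (unfold eta; apply Rmin_pos; [apply Rdiv_lt_0_compat|apply Rinv_0_lt_compat]; lra).
  assert (he1 : eta <= delta / (2 * INR d)) by apply Rmin_l.
  assert (he2 : 2 * eta <= / INR d).
  { assert (eta <= / (2 * INR d)) by apply Rmin_r. rewrite Rinv_mult in H0. lra. }
  assert (hde : INR d * eta <= delta / 2).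
  { apply (Rmult_le_compat_l (INR d)) in he1; [|lra].
    replace (INR d * (delta / (2 * INR d))) with (delta / 2) in he1 by (field; lra). exact he1. }
  apply (H eta he). apply (sm_fib Q (sc d) _ _ hs).
  - intros y [hy hr]. split. apply S1, hy.
    destruct (lam_circ L x hL hx) as [cx1 cx2]. destruct (lam_circ L y hL hy) as [cy1 cy2].
    apply rho_lt_char in hr. apply rho_lt_char. unfold sc; simpl.
    assert (l1 := sigma_lip d (fst x) (fst y) cx1 cy1). assert (l2 := sigma_lip d (snd x) (snd y) cx2 cy2).
    assert (l3 := sigma_lip d (fst x) (snd y) cx1 cy2). assert (l4 := sigma_lip d (snd x) (fst y) cx2 cy1).
    destruct hr as [[r1 r2]|[r1 r2]]; [left|right]; split; nra.
  - apply fib2_sc; auto. apply (lam_circ L x hL hx).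
Qed.

Lemma disjoint_sym x y : disjoint_chords x y -> disjoint_chords y x.
Proof. intros h [z [h1 h2]]. apply h. exists z. auto. Qed.

Lemma disjoint_same x x' y : same x x' -> disjoint_chords x' y -> disjoint_chords x y.
Proof.
  destruct x as [p q], x' as [p' q']. unfold same, same_chord; simpl. intros [[-> ->]|[-> ->]] h; auto.
  exact (disjoint_swapl (p', q') y h).
Qed.

Theorem partH_sib Q d L : (2 <= d)%nat -> sibling_invariant d L -> GET2 Q d L -> GET3 Q d L ->
  sibling_invariant d (partH Q L).
Proof.
  intros hd hS G2 G3. assert (hL := sib_lam d L hS). assert (hS' := hS).
  destruct hS' as [_ [S1 [S2 S3]]].
  split; [apply partH_lam; auto|]. split; [|split].
  - intros a b h. apply (partH_PB Q L _ _ hL). apply (partH_PB Q L _ _ hL) in h.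
    apply (PB_image Q d L (a, b)); auto. lia.
  - intros a b h. apply (partH_PB Q L _ _ hL) in h.
    assert (Y : forall n : nat, exists y, PB Q L y /\ rho (sc d y) (a, b) < / INR (S n)).
    { intro n. apply G2; auto. apply inv_S_pos. }
    destruct (choice _ Y) as [y Hy].
    destruct (extract_ch y) as [phi [hphi [l hl]]].
    { intro n. apply (Lc_oncirc L); auto. apply (Hy n). }
    assert (PBl : PB Q L l) by (apply (PB_closed Q L (fun n => y (phi n))); auto; intro; apply Hy).
    assert (R0 : rho (sc d l) (a, b) = 0).
    { apply (rho_lim_zero (fun n => sc d (y (phi n)))). apply cvc_sc, hl.
      intro n. eapply Rlt_le_trans. apply Hy. apply inv_S_mono, incr_ge, hphi. }
    apply rho_zero_same in R0. destruct l as [c e].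
    unfold same, same_chord, sc in R0; simpl in R0. destruct R0 as [[e1 e2]|[e1 e2]].
    + exists c, e. split; auto. apply (partH_PB Q L _ _ hL), PBl.
    + exists e, c. split; auto. apply (partH_PB Q L _ _ hL). apply (PB_swap Q L (c, e) hL PBl).
  - intros a b h hnc. apply (partH_PB Q L _ _ hL) in h.
    destruct (classic (a = b)) as [<-|hab].
    + destruct (S3 a a (proj1 h) hnc) as [f' [f0 [fl [fd fs]]]].
      exists (fun i => (fst (f' i), fst (f' i))). split; [rewrite f0; reflexivity|].
      split; [|split].
      * intros i hi. apply (partH_PB Q L _ _ hL). apply PB_point; auto.
        apply ((proj1 (proj2 hL)) _ _ (fl i hi)).
      * intros i j hi hj hij. simpl. apply disjoint_pts. intro E. apply (fd i j hi hj hij).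
        exists (fst (f' i)). split. apply seg_left. rewrite E. apply seg_left.
      * intros i hi. simpl. destruct (fs i hi) as [[e1 e2]|[e1 e2]]; left; auto.
    + assert (hne : sigma d a <> sigma d b) by (intro E; apply hnc; split; auto).
      assert (Y : forall n : nat, exists f, sibc d L f /\ (forall i, (i < d)%nat -> PB Q L (f i)) /\
                rho (f O) (a, b) < / INR (S n)).
      { intro n. apply G3; auto. apply inv_S_pos. }
      destruct (choice _ Y) as [g Hg].
      destruct (extract_fam g d) as [phi [hphi [hh Hh]]].
      { intros n i hi. apply (Lc_oncirc L); auto. apply (proj1 (Hg n)), hi. }
      assert (Hs : sibc d L hh).
      { apply (siblim d L (fun n => g (phi n))); auto. lia. intro n; apply Hg.
        assert (R0 : rho (hh O) (a, b) = 0).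
        { apply (rho_lim_zero (fun n => g (phi n) O)). apply Hh. lia.
          intro n. eapply Rlt_le_trans. apply Hg. apply inv_S_mono, incr_ge, hphi. }
        apply rho_zero_same in R0. destruct (hh O) as [p q].
        unfold same, same_chord in R0; simpl in *. destruct R0 as [[-> ->]|[-> ->]]; auto. }
      assert (PBh : forall i, (i < d)%nat -> PB Q L (hh i)).
      { intros i hi. apply (PB_closed Q L (fun n => g (phi n) i)); auto. intro n. apply Hg, hi. }
      assert (S0 : same (hh O) (a, b)).
      { apply rho_zero_same. apply (rho_lim_zero (fun n => g (phi n) O)). apply Hh. lia.
        intro n. eapply Rlt_le_trans. apply Hg. apply inv_S_mono, incr_ge, hphi. }
      destruct Hs as [Hl [Hd Hsc]].
      exists (fun i => if Nat.eqb i O then (a, b) else hh i). split; [reflexivity|]. split; [|split].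
      * intros i hi. apply (partH_PB Q L _ _ hL). destruct (Nat.eqb_spec i O). exact h.
        assert (X := PBh i hi). destruct (hh i); exact X.
      * intros i j hi hj hij. destruct (Nat.eqb_spec i O), (Nat.eqb_spec j O); try lia.
        -- subst i. apply (disjoint_same _ (hh O)). apply same_sym, S0. apply Hd; auto; lia.
        -- subst j. apply disjoint_sym. apply (disjoint_same _ (hh O)). apply same_sym, S0. apply Hd; auto; lia.
        -- apply Hd; auto.
      * intros i hi. change (same (sc d (if Nat.eqb i O then (a, b) else hh i)) (sc d (a, b))).
        destruct (Nat.eqb_spec i O). apply same_refl.
        eapply same_trans. apply Hsc, hi. apply same_sc, S0.
Qed.

Lemma fin_arc a delta : on_circle a -> 0 < delta ->
  ~ fin (fun y => fst y = snd y /\ on_circle (fst y) /\ dist (fst y) a < delta).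
Proof. intros h1 h2 hf. apply (arc_uncnt a delta h1 h2), fin_cnt, hf. Qed.

Definition Qcnt : Sm := {| small := cnt; sm_mono := cnt_mono; sm_fib := cnt_fib2; sm_arc := arc_uncnt |}.
Definition Qfin : Sm := {| small := fin; sm_mono := fin_mono; sm_fib := fin_fib2; sm_arc := fin_arc |}.

Lemma fib2_sub F S S' : fib2 F S -> (forall y, S' y -> S y) -> fib2 F S'.
Proof. intros h hs z. destruct (h z) as [x1 [x2 K]]. exists x1, x2. intros x hx. apply K, hs, hx. Qed.

Lemma fib2_compose F G S H : fib2 G S -> (forall y z, S y -> same (F y) z -> same (G y) (H z)) -> fib2 F S.
Proof.
  intros hG hc z. destruct (hG (H z)) as [x1 [x2 K]]. exists x1, x2. intros x hx hs.
  apply K; auto.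
Qed.

Lemma rho_lim_le u l x r : cvc u l -> (forall n, rho (u n) x <= r) -> rho l x <= r.
Proof.
  intros hc H. apply Rnot_lt_le. intro hp.
  destruct (cvc_rho u l hc (rho l x - r)) as [N HN]. lra.
  specialize (HN N (le_n _)). specialize (H N). assert (t := rho_tri l (u N) x). rewrite rho_sym in HN. lra.
Qed.

Lemma nd_near d x y eta : oncirc x -> oncirc y -> rho x y <= eta ->
  2 * INR d * eta < dist (sigma d (fst x)) (sigma d (snd x)) -> sigma d (fst y) <> sigma d (snd y).
Proof.
  intros [cx1 cx2] [cy1 cy2] hr hlt E. apply rho_le_char in hr.
  assert (l1 := sigma_lip d (fst x) (fst y) cx1 cy1). assert (l2 := sigma_lip d (snd x) (snd y) cx2 cy2).
  assert (l3 := sigma_lip d (fst x) (snd y) cx1 cy2). assert (l4 := sigma_lip d (snd x) (fst y) cx2 cy1).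
  rewrite E in l1, l4.
  assert (t1 := dist_tri3 (sigma d (fst x)) (sigma d (snd y)) (sigma d (snd y)) (sigma d (snd x))).
  rewrite dist_refl, (dist_sym (sigma d (snd y)) (sigma d (snd x))) in t1.
  assert (0 <= INR d) by apply pos_INR.
  destruct hr as [[r1 r2]|[r1 r2]].
  - apply (Rmult_le_compat_l (INR d)) in r1; auto. apply (Rmult_le_compat_l (INR d)) in r2; auto. lra.
  - apply (Rmult_le_compat_l (INR d)) in r1; auto. apply (Rmult_le_compat_l (INR d)) in r2; auto. lra.
Qed.

Lemma tail_notfin L u l : lamination L -> cvc u l -> (forall i j, (i < j)%nat -> ~ same (u i) (u j)) ->
  (forall n, Lc L (u n)) -> forall e, 0 < e -> ~ fin (nb L l e).
Proof.
  intros hL hc hd hu e he. destruct (cvc_rho u l hc e he) as [N HN].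
  apply (not_fin_seq _ (fun k => u (N + k)%nat)).
  - intros i j hij. apply hd. lia.
  - intro i. split. apply hu. rewrite rho_sym. apply HN. lia.
Qed.

Lemma bad_cnt (Q : Sm) L : (forall S, small Q S -> cnt S) -> lamination L ->
  cnt (fun p => Lc L p /\ ~ PB Q L p).
Proof.
  intros hQ hL. apply cond_cnt. intros p [hp hn].
  apply NNPP. intro K. apply hn. split; auto. intros delta hd hs. apply K. exists delta. split; auto.
  apply (cnt_sub _ _ (hQ _ hs)). intros y [[hy _] hr]. split; auto.
Qed.

Lemma GET2_cnt d L : sibling_invariant d L -> GET2 Qcnt d L.
Proof.
  intros hS x [hx H] delta hd. assert (hL := sib_lam d L hS). destruct hS as [_ [_ [S2 _]]].
  assert (Pre : forall y, exists p, Lc L y -> Lc L p /\ sc d p = y).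
  { intro y. destruct (classic (Lc L y)) as [h|h].
    - destruct (S2 _ _ h) as [c [e [h1 [h2 h3]]]]. exists (c, e). intros _. split; auto.
      unfold sc; simpl. rewrite h2, h3. destruct y; reflexivity.
    - exists y. intro; contradiction. }
  destruct (choice _ Pre) as [P HP].
  apply NNPP. intro K. apply (H delta hd).
  simpl. apply (cnt_fib2 P _ _ (bad_cnt Qcnt L (fun S h => h) hL)).
  - intros y [hy hr]. destruct (HP y hy) as [h1 h2]. split; auto. intro hb. apply K.
    exists (P y). split; auto. rewrite h2. rewrite rho_sym. exact hr.
  - intro z. exists (sc d z), (sc d z). intros y [hy _] hs. left.
    destruct (HP y hy) as [_ h2]. rewrite <- h2. apply same_sc, hs.
Qed.

Lemma eta_choice d x : (1 <= d)%nat -> oncirc x -> sigma d (fst x) <> sigma d (snd x) -> forall delta, 0 < delta ->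
  exists eta, 0 < eta /\ eta <= delta /\ 2 * eta <= / INR d /\
     2 * INR d * eta < dist (sigma d (fst x)) (sigma d (snd x)).
Proof.
  intros hd hx hne delta hdel.
  assert (hD : 0 < INR d) by (apply lt_0_INR; lia).
  set (D := dist (sigma d (fst x)) (sigma d (snd x))).
  assert (hDp : 0 < D).
  { assert (0 <= D) by apply dist_nonneg. destruct (Req_dec D 0). exfalso; apply hne, dist_eq0; auto. lra. }
  exists (Rmin delta (Rmin (/ (2 * INR d)) (D / (4 * INR d)))).
  assert (m1 := Rmin_l delta (Rmin (/ (2 * INR d)) (D / (4 * INR d)))).
  assert (m2 := Rmin_r delta (Rmin (/ (2 * INR d)) (D / (4 * INR d)))).
  assert (m3 := Rmin_l (/ (2 * INR d)) (D / (4 * INR d))).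
  assert (m4 := Rmin_r (/ (2 * INR d)) (D / (4 * INR d))).
  set (eta := Rmin delta (Rmin (/ (2 * INR d)) (D / (4 * INR d)))) in *.
  assert (p1 : 0 < / (2 * INR d)) by (apply Rinv_0_lt_compat; lra).
  assert (p2 : 0 < D / (4 * INR d)) by (apply Rdiv_lt_0_compat; lra).
  split. unfold eta. apply Rmin_pos; auto. apply Rmin_pos; auto.
  split; auto. split.
  - assert (/ (2 * INR d) = / 2 * / INR d) by (field; lra). lra.
  - assert (eta <= D / (4 * INR d)) by lra.
    apply (Rmult_le_compat_l (2 * INR d)) in H; [|lra].
    replace (2 * INR d * (D / (4 * INR d))) with (D / 2) in H by (field; lra). lra.
Qed.

Lemma GET3_cnt d L : (2 <= d)%nat -> sibling_invariant d L -> GET3 Qcnt d L.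
Proof.
  intros hd hS x [hx H] hne delta hdel. assert (hL := sib_lam d L hS). destruct hS as [_ [_ [_ S3]]].
  assert (cx := lam_circ L x hL hx).
  destruct (eta_choice d x ltac:(lia) cx hne delta hdel) as [eta [he [he1 [he2 he3]]]].
  set (S := nb L x eta).
  assert (Sib : forall y, exists f, S y -> f O = y /\ sibc d L f).
  { intro y. destruct (classic (S y)) as [[hy hr]|h].
    - assert (nc : ~ critical d (fst y) (snd y)).
      { intros [_ E]. apply (nd_near d x y eta cx (lam_circ L y hL hy)); auto. lra. }
      destruct (S3 _ _ hy nc) as [f [f0 [fl [fdis fs]]]]. exists f. intros _. split.
      rewrite f0; destruct y; reflexivity. split; [exact fl|split; [exact fdis|]].
      intros i hi. rewrite f0. apply fs, hi.
    - exists (fun _ => y). intro; contradiction. }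
  destruct (choice _ Sib) as [F HF].
  assert (fS : fib2 (sc d) S) by (apply fib2_sc; auto; lia).
  assert (Bad : cnt (fun y => exists i, (i < d)%nat /\ S y /\ ~ PB Qcnt L (F y i))).
  { apply (cnt_sub _ (fun y => exists i, (i < d)%nat /\ S y /\ ~ PB Qcnt L (F y i))); [|auto].
    apply (cnt_sub _ (fun y => exists i, (fun i y => (i < d)%nat /\ S y /\ ~ PB Qcnt L (F y i)) i y)); [|auto].
    apply cnt_union. intro i.
    apply (cnt_fib2 (fun y => F y i) _ _ (bad_cnt Qcnt L (fun S h => h) hL)).
    - intros y [hi [hy hn]]. destruct (HF y hy) as [_ [fl _]]. split; auto.
    - apply (fib2_compose _ (sc d) _ (sc d) (fib2_sub _ _ _ fS (fun y h => proj1 (proj2 h)))).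
      intros y z [hi [hy _]] hs. destruct (HF y hy) as [f0 [_ [_ fs]]].
      rewrite <- f0. eapply same_trans. apply same_sym, fs, hi. apply same_sc, hs. }
  apply NNPP. intro K. apply (H eta he). simpl.
  apply (cnt_sub _ _ Bad). intros y hy. apply NNPP. intro hn. apply K.
  destruct (HF y hy) as [f0 hf]. exists (F y). split; auto. split.
  - intros i hi. apply NNPP. intro hb. apply hn. exists i. auto.
  - rewrite f0. rewrite rho_sym. destruct hy. lra.
Qed.

Lemma incr_lt phi : incr phi -> forall i j, (i < j)%nat -> (phi i < phi j)%nat.
Proof. intros h i j hij. assert (X := incr_mono phi h (S i) j hij). specialize (h i). lia. Qed.

Lemma GET2_fin d L : sibling_invariant d L -> GET2 Qfin d L.
Proof.
  intros hS x [hx H] delta hd. assert (hL := sib_lam d L hS). destruct hS as [_ [_ [S2 _]]].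
  assert (Pre : forall y, exists p, Lc L y -> Lc L p /\ sc d p = y).
  { intro y. destruct (classic (Lc L y)) as [h|h].
    - destruct (S2 _ _ h) as [c [e [h1 [h2 h3]]]]. exists (c, e). intros _. split; auto.
      unfold sc; simpl. rewrite h2, h3. destruct y; reflexivity.
    - exists y. intro; contradiction. }
  destruct (choice _ Pre) as [P HP].
  assert (NS : ~ fin (nb L x (delta / 2))) by (apply (H (delta/2)); lra).
  destruct (choose_seq (fun n g z => nb L x (delta/2) z /\ forall i, (i < n)%nat -> ~ same z (g i)))
    as [y Hy].
  { intros n f f' z E [h1 h2]. split; auto. intros i hi. rewrite <- E; auto. }
  { intros n f. destruct (not_fin_avoid _ NS n f) as [z [h1 h2]]. exists z. split; auto. }
  set (p := fun n => P (y n)).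
  assert (Hp : forall n, Lc L (p n) /\ sc d (p n) = y n) by (intro n; apply HP, (Hy n)).
  assert (Dp : forall i j, (i < j)%nat -> ~ same (p i) (p j)).
  { intros i j hij hs. apply (proj2 (Hy j) i hij). apply same_sym.
    rewrite <- (proj2 (Hp i)), <- (proj2 (Hp j)). apply same_sc, hs. }
  destruct (extract_ch p) as [phi [hphi [l hl]]].
  { intro n. apply (Lc_oncirc L); auto. apply Hp. }
  exists l. split.
  - split. apply (leaf_lim L (fun n => p (phi n))); auto. intro; apply Hp.
    intros e he. apply (tail_notfin L (fun n => p (phi n))); auto.
    + intros i j hij. apply Dp. apply incr_lt; auto.
    + intro; apply Hp.
  - assert (rho (sc d l) x <= delta / 2).
    { apply (rho_lim_le (fun n => sc d (p (phi n)))). apply cvc_sc, hl.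
      intro n. rewrite (proj2 (Hp (phi n))). rewrite rho_sym. apply Rlt_le, (Hy (phi n)). }
    lra.
Qed.

Lemma GET3_fin d L : (2 <= d)%nat -> sibling_invariant d L -> GET3 Qfin d L.
Proof.
  intros hd hS x [hx H] hne delta hdel. assert (hL := sib_lam d L hS). destruct hS as [_ [_ [_ S3]]].
  assert (cx := lam_circ L x hL hx).
  destruct (eta_choice d x ltac:(lia) cx hne (delta/2) ltac:(lra)) as [eta [he [he1 [he2 he3]]]].
  set (S := nb L x eta).
  assert (Sib : forall y, exists f, S y -> f O = y /\ sibc d L f).
  { intro y. destruct (classic (S y)) as [[hy hr]|h].
    - assert (nc : ~ critical d (fst y) (snd y)).
      { intros [_ E]. apply (nd_near d x y eta cx (lam_circ L y hL hy)); auto. lra. }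
      destruct (S3 _ _ hy nc) as [f [f0 [fl [fdis fs]]]]. exists f. intros _. split.
      rewrite f0; destruct y; reflexivity. split; [exact fl|split; [exact fdis|]].
      intros i hi. rewrite f0. apply fs, hi.
    - exists (fun _ => y). intro; contradiction. }
  destruct (choice _ Sib) as [F HF].
  assert (fS : fib2 (sc d) S) by (apply fib2_sc; auto; lia).
  assert (NS : ~ fin S) by (apply (H eta he)).
  destruct (choose_seq (fun n g z => S z /\ forall i, (i < n)%nat -> ~ same (sc d z) (sc d (g i))))
    as [y Hy].
  { intros n f f' z E [h1 h2]. split; auto. intros i hi. rewrite <- E; auto. }
  { intros n f. apply NNPP. intro K. apply NS.
    apply (fin_fib2 (sc d) S (fun w => exists i, (i < n)%nat /\ same w (sc d (f i)))).
    - exists n, (fun i => sc d (f i)). intros w [i [hi hw]]. exists i. auto.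
    - intros z hz. apply NNPP. intro K2. apply K. exists z. split; auto. intros i hi hs. apply K2. eauto.
    - exact fS. }
  set (g := fun n => F (y n)).
  assert (Hg : forall n, g n O = y n /\ sibc d L (g n)) by (intro n; apply HF, (Hy n)).
  destruct (extract_fam g d) as [phi [hphi [h Hh]]].
  { intros n i hi. apply (Lc_oncirc L); auto. apply (proj1 (proj2 (Hg n))), hi. }
  assert (R0 : rho (h O) x <= eta).
  { apply (rho_lim_le (fun n => g (phi n) O)). apply Hh. lia.
    intro n. rewrite (proj1 (Hg (phi n))). rewrite rho_sym. apply Rlt_le, (Hy (phi n)). }
  assert (Sh : sibc d L h).
  { assert (ch0 : oncirc (h O)).
    { apply (lam_circ L _ hL). apply (leaf_lim L (fun n => g (phi n) O)); auto.
      intro n; apply (proj1 (proj2 (Hg (phi n)))). lia. apply Hh. lia. }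
    assert (R1 : rho x (h O) <= eta) by (rewrite rho_sym; auto).
    apply (siblim d L (fun n => g (phi n))); auto. lia. intro; apply Hg.
    exact (nd_near d x (h O) eta cx ch0 R1 he3). }
  exists h. split; [exact Sh|]. split.
  - intros i hi. split. apply (proj1 Sh), hi.
    intros e he'. apply (tail_notfin L (fun n => g (phi n) i) (h i) hL (Hh i hi)); [| |exact he'].
    + intros a b hab hs. apply (proj2 (Hy (phi b)) (phi a)). apply incr_lt; auto.
      destruct (Hg (phi a)) as [ea [_ [_ sa]]]. destruct (Hg (phi b)) as [eb [_ [_ sb]]].
      rewrite <- ea, <- eb. eapply same_trans. apply same_sym, sb, hi.
      eapply same_trans. apply same_sym, same_sc, hs. apply sa, hi.
    + intro n. apply (proj1 (proj2 (Hg (phi n)))), hi.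
  - lra.
Qed.

Lemma perfect_partH L : perfect_part L = partH Qcnt L.
Proof.
  apply functional_extensionality. intro a. apply functional_extensionality. intro b.
  apply propositional_extensionality. unfold perfect_part, partH. simpl. split.
  - intros [h H]. split; auto. intros eps he hc. apply (H eps he). apply cnt_countable. exact hc.
  - intros [h H]. split; auto. intros eps he hc. apply (H eps he). apply cnt_countable in hc. exact hc.
Qed.

Lemma part1 d L : (2 <= d)%nat -> sibling_invariant d L -> sibling_invariant d (perfect_part L).
Proof.
  intros hd hS. rewrite perfect_partH. apply partH_sib; auto.
  apply GET2_cnt; auto. apply GET3_cnt; auto.
Qed.

Lemma part2 d L : sibling_invariant d L -> ~ countable_lam L -> nonempty_lam (perfect_part L).
Proof.
  intros hS hc. assert (hL := sib_lam d L hS). apply NNPP. intro hn. apply hc.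
  unfold countable_lam. apply cnt_countable. apply cond_cnt. intros x [hx hne].
  apply NNPP. intro K. apply hn. exists (fst x), (snd x). split; auto.
  rewrite perfect_partH. apply (partH_PB Qcnt L _ _ hL). destruct x as [p q]. simpl.
  split; auto. intros delta hd hs. apply K. exists delta. split; auto.
  apply (cnt_sub _ _ hs). intros y [[hy _] hr]. split; auto.
Qed.

Lemma min_pos (en : nat -> ch) x : forall k, exists eta, 0 < eta /\
  forall n, (n < k)%nat -> ~ same (en n) x -> eta <= rho x (en n).
Proof.
  induction k.
  - exists 1. split. lra. intros; lia.
  - destruct IHk as [e0 [he0 H0]]. destruct (classic (same (en k) x)) as [hs|hs].
    + exists e0. split; auto. intros n hn hns. destruct (Nat.eq_dec n k). subst; contradiction. apply H0; auto. lia.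
    + assert (hp : 0 < rho x (en k)).
      { assert (h := rho_nonneg x (en k)). destruct (Req_dec (rho x (en k)) 0) as [E|E].
        exfalso. apply hs, same_sym, rho_zero_same, E. lra. }
      exists (Rmin e0 (rho x (en k))). split. apply Rmin_pos; auto.
      intros n hn hns. destruct (Nat.eq_dec n k). subst. apply Rmin_r.
      eapply Rle_trans. apply Rmin_l. apply H0; auto. lia.
Qed.

Lemma nonisol_notfin L x : (forall delta, 0 < delta -> exists y, Lc L y /\ ~ same y x /\ rho x y < delta) ->
  forall delta, 0 < delta -> ~ fin (nb L x delta).
Proof.
  intros H delta hd [k [en Hk]]. destruct (min_pos en x k) as [eta [he Heta]].
  destruct (H (Rmin delta eta)) as [y [hy [hns hr]]]. apply Rmin_pos; auto.
  destruct (Hk y) as [n [hn hs]]. split; auto. eapply Rlt_le_trans. apply hr. apply Rmin_l.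
  assert (hn' : ~ same (en n) x). { intro E. apply hns. eapply same_trans; eauto. }
  assert (E := Heta n hn hn'). assert (t := rho_tri x y (en n)). rewrite (same_rho _ _ hs) in t.
  assert (Rmin delta eta <= eta) by apply Rmin_r. lra.
Qed.

Lemma nondeg_near a b y : a <> b -> rho (a, b) y <= dist a b / 4 -> fst y <> snd y.
Proof.
  intros hab hr E. apply rho_le_char in hr. simpl in hr.
  assert (hD : 0 < dist a b).
  { assert (h := dist_nonneg a b). destruct (Req_dec (dist a b) 0). exfalso; apply hab, dist_eq0; auto. lra. }
  assert (t := dist_triangle a (fst y) b). rewrite E in t.
  rewrite E in hr. rewrite (dist_sym (snd y) b) in t. lra.
Qed.

Lemma rho_lim_le_ev u l x r N : cvc u l -> (forall n, (n >= N)%nat -> rho x (u n) <= r) -> rho x l <= r.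
Proof.
  intros hc H. apply Rnot_lt_le. intro hp.
  destruct (cvc_rho u l hc (rho x l - r)) as [M HM]. lra.
  specialize (HM (max N M) ltac:(lia)). specialize (H (max N M) ltac:(lia)).
  assert (t := rho_tri x (u (max N M)) l). lra.
Qed.

Lemma baire L a b : lamination L -> countable_lam L -> L a b -> a <> b ->
  (forall x, Lc L x -> fst x <> snd x -> forall delta, 0 < delta -> ~ fin (nb L x delta)) -> False.
Proof.
  intros hL hc hab hne Hnf.
  apply cnt_countable in hc. destruct hc as [en Hen].
  set (r0 := dist a b / 4).
  assert (hr0 : 0 < r0).
  { assert (h := dist_nonneg a b). unfold r0. destruct (Req_dec (dist a b) 0). exfalso; apply hne, dist_eq0; auto. lra. }
  set (Qp := fun (p : ch * R) => Lc L (fst p) /\ 0 < snd p /\ rho (a, b) (fst p) + snd p <= r0).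
  assert (Step : forall (kp : nat * (ch * R)), exists p', Qp (snd kp) ->
     Qp p' /\ snd p' <= snd (snd kp) / 4 /\ rho (fst (snd kp)) (fst p') < snd (snd kp) / 2 /\
     forall y, rho (fst p') y <= snd p' -> ~ same y (en (fst kp))).
  { intros [k [l r]]. simpl. destruct (classic (Qp (l, r))) as [hq|hq]; [|exists (l, r); intro; contradiction].
    destruct hq as [hl [hr hlr]]. simpl in hl, hr, hlr.
    assert (nd : fst l <> snd l).
    { apply (nondeg_near a b); auto. assert (h := rho_nonneg (a, b) l). fold r0. lra. }
    destruct (not_fin_avoid _ (Hnf l hl nd (r / 2) ltac:(lra)) 1 (fun _ => en k)) as [l' [[hl' hr'] hav]].
    assert (hav' : ~ same l' (en k)) by (apply (hav O); lia).
    assert (hp : 0 < rho l' (en k)).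
    { assert (h := rho_nonneg l' (en k)). destruct (Req_dec (rho l' (en k)) 0) as [E|E].
      exfalso. apply hav', rho_zero_same, E. lra. }
    exists (l', Rmin (r / 4) (rho l' (en k) / 2)). intros _. simpl.
    assert (m1 := Rmin_l (r / 4) (rho l' (en k) / 2)). assert (m2 := Rmin_r (r / 4) (rho l' (en k) / 2)).
    assert (mp : 0 < Rmin (r / 4) (rho l' (en k) / 2)) by (apply Rmin_pos; lra).
    split; [|split; [lra|split; [lra|]]].
    - split; auto. split; auto. simpl. assert (t := rho_tri (a, b) l l'). lra.
    - intros y hy hs. assert (t := rho_tri l' y (en k)). rewrite (same_rho _ _ hs) in t. lra. }
  destruct (choice _ Step) as [st Hst].
  set (sq := fix sq n := match n with O => ((a, b), r0) | S k => st (k, sq k) end).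
  assert (Q0 : forall n, Qp (sq n)).
  { induction n.
    - split; simpl. exact hab. split. exact hr0. rewrite rho_refl. lra.
    - exact (proj1 (Hst (n, sq n) IHn)). }
  assert (HS : forall n, snd (sq (S n)) <= snd (sq n) / 4 /\ rho (fst (sq n)) (fst (sq (S n))) < snd (sq n) / 2 /\
     forall y, rho (fst (sq (S n))) y <= snd (sq (S n)) -> ~ same y (en n)).
  { intro n. exact (proj2 (Hst (n, sq n) (Q0 n))). }
  assert (Chain : forall k m, (k <= m)%nat -> rho (fst (sq k)) (fst (sq m)) + snd (sq m) <= snd (sq k)).
  { intros k m hkm. induction hkm.
    - rewrite rho_refl. lra.
    - destruct (HS m) as [h1 [h2 _]]. assert (t := rho_tri (fst (sq k)) (fst (sq m)) (fst (sq (S m)))).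
      destruct (Q0 m) as [_ [hp _]]. unfold ch in *. lra. }
  destruct (extract_ch (fun n => fst (sq n))) as [phi [hphi [l hl]]].
  { intro n. apply (Lc_oncirc L); auto. apply (Q0 n). }
  assert (Ll : Lc L l) by (apply (leaf_lim L (fun n => fst (sq (phi n)))); auto; intro n; apply (Q0 (phi n))).
  assert (Near : forall k, rho (fst (sq k)) l <= snd (sq k)).
  { intro k. apply (rho_lim_le_ev (fun n => fst (sq (phi n))) l _ _ k hl).
    intros n hn. assert (X := incr_ge phi hphi n). assert (C := Chain k (phi n) ltac:(lia)).
    destruct (Q0 (phi n)) as [_ [hp _]]. unfold ch in *. lra. }
  assert (nd : fst l <> snd l).
  { apply (nondeg_near a b); auto. assert (h := Near O). simpl in h. fold r0. lra. }
  destruct (Hen l (conj Ll nd)) as [n hn].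
  destruct (HS n) as [_ [_ h3]]. apply (h3 l (Near (S n)) hn).
Qed.

Theorem lemmal_proof (d : nat) (hd : (2 <= d)%nat) :
  (forall L, sibling_invariant d L -> sibling_invariant d (perfect_part L)) /\
  (forall L, sibling_invariant d L -> ~ countable_lam L -> nonempty_lam (perfect_part L)) /\
  (forall L, chief d L -> perfect L \/ countable_lam L) /\
  (forall L, chief d L -> countable_lam L ->
     forall a b, L a b -> a <> b -> isolated L a b).
Proof.
  split; [|split; [|split]].
  - intros L hS. apply part1; auto.
  - intros L hS hc. apply (part2 d); auto.
  - intros L [hS [hne Hmin]]. destruct (classic (countable_lam L)) as [hc|hc]; [right; exact hc|left].
    assert (hL := sib_lam d L hS).
    assert (Sub : forall a b, L a b -> perfect_part L a b).
    { apply Hmin. apply part1; auto. apply (part2 d); auto. intros a b [h _]; exact h. }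
    intros a b hab hn hiso. apply hiso. intros eps he.
    destruct (Sub a b hab) as [_ H]. apply NNPP. intro K. apply (H eps he).
    exists (fun _ => (a, b)). intros c e [hce hcl]. exists O. simpl.
    apply NNPP. intro K2. apply K. exists c, e. split; auto. split; auto.
    intro hs. apply K2. unfold same_chord in *. destruct hs as [[-> ->]|[-> ->]]; auto.
  - intros L [hS [hne Hmin]] hc a b hab hn hlim.
    assert (hL := sib_lam d L hS).
    assert (PBab : PB Qfin L (a, b)).
    { split. exact hab. simpl. apply nonisol_notfin. intros delta hdel.
      destruct (hclose_rho_eps delta hdel) as [eps [heps K]].
      destruct (hlim eps heps) as [c [e [hce [hns hcl]]]].
      exists (c, e). split; auto. split.
      - intro hs. apply hns. unfold same, same_chord in hs; simpl in hs.
        unfold same_chord. destruct hs as [[-> ->]|[-> ->]]; auto.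
      - destruct (lam_circ L (a, b) hL hab). destruct (lam_circ L (c, e) hL hce).
        apply (K (a, b) (c, e)); auto. }
    assert (SI : sibling_invariant d (partH Qfin L)).
    { apply partH_sib; auto. apply GET2_fin; auto. apply GET3_fin; auto. }
    assert (Sub : forall x y, L x y -> partH Qfin L x y).
    { apply Hmin; auto. exists a, b. split; auto. apply (partH_PB Qfin L a b hL); auto.
      intros x y [h _]; exact h. }
    apply (baire L a b hL hc hab hn).
    intros x hx hnx delta hdel. destruct x as [p q].
    apply (partH_PB Qfin L p q hL) in Sub; auto. apply (proj2 Sub); auto.
Qed.


Theorem lemmal (d : nat) (hd : (2 <= d)%nat) :
  (forall L, sibling_invariant d L -> sibling_invariant d (perfect_part L)) /\
  (forall L, sibling_invariant d L -> ~ countable_lam L -> nonempty_lam (perfect_part L)) /\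
  (forall L, chief d L -> perfect L \/ countable_lam L) /\
  (forall L, chief d L -> countable_lam L ->
     forall a b, L a b -> a <> b -> isolated L a b).
Proof. exact (lemmal_proof d hd). Qed.
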